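(* Let $G$ be a group with a conjugation-closed generating set $X$ and let $g\in\mathrm{Mon}(X)$. In the circular topological poset $\mathcal F(G,g,\mathbf S)$, the subspace of maximal elements is homeomorphic to the interval complex $K_g$.
   Context: $\mathrm{Mon}(X)$ is the submonoid of $G$ generated by $X$; for $h\in\mathrm{Mon}(X)$, $\ell(h)$ is the minimal length of a product of elements of $X$ equal to $h$. For $h,g\in\mathrm{Mon}(X)$ write $h\le g$ if there is $h'\in\mathrm{Mon}(X)$ with $hh'=g$ and $\ell(h)+\ell(h')=\ell(g)$; $P_g=[1,g]=\{h:h\le g\}$ is a bounded graded poset of height $\ell(g)$. Order complex and interval complex: $O_g$ is the order complex of $[1,g]$ (a $k$-simplex, with ordered vertices, for each chain $x_0<\cdots<x_k$), metrized so that each maximal simplex (maximal chain $x_0<\cdots<x_n$, $n=\ell(g)$) is the standard orthoscheme $\{0\le y_1\le\cdots\le y_n\le1\}\subset\mathbb R^n$ with $x_i$ at the vertex whose last $i$ coordinates are $1$ and others $0$. $K_g$ is the quotient of $O_g$ obtained by identifying (via the order-preserving affine map) the simplices of chains $x_0<\cdots<x_k$ and $y_0<\cdots<y_k$ whenever $x_{i-1}^{-1}x_i=y_{i-1}^{-1}y_i$ for all $1\le i\le k$. Linear factorizations: a linear factorization of $h\in\mathrm{Mon}(X)$ is a vector $[x_L\ x_1\cdots x_k\ x_R]$ ($k\ge0$) of elements of $\mathrm{Mon}(X)$ with $x_1,\dots,x_k\ne1$, $\ell(x_L)+\sum\ell(x_i)+\ell(x_R)=\ell(h)$, $x_Lx_1\cdots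 x_kx_R=h$. A $G$-multiset on a set $S$ is a function $S\to G$ trivial at all but finitely many points. A weighted linear factorization of $h$ is a $G$-multiset $\mathbf u$ on $\mathbf I=[0,1]$ such that, with $0<s_1<\dots<s_k<1$ the points of $(0,1)$ where $\mathbf u$ is nontrivial, $P(\mathbf u)=[\mathbf u(0)\ \mathbf u(s_1)\cdots\mathbf u(s_k)\ \mathbf u(1)]$ is a linear factorization of $h$; write $\mathbf u=0^{x_L}s_1^{x_1}\cdots s_k^{x_k}1^{x_R}$. $\mathrm{WFact}(G,h,\mathbf I)$ is the set of these, topologized as follows: with $n=\ell(h)$, identify the weighted linear factorizations of $n$ in $(\mathbb Z,\{1\})$, $0^{a_L}s_1^{a_1}\cdots1^{a_R}$, with the points of $\{0\le y_1\le\cdots\le y_n\le1\}\subset\mathbb R^n$ obtained by listing the multiset ($a_L$ zeros, $a_i$ copies of $s_i$, $a_R$ ones) in nondecreasing order; the map $\mathbf u\mapsto\ell\circ\mathbf u$ is a bijection from each set $\{\mathbf u:P(\mathbf u)=\mathbf x\}$ onto an open face of this orthoscheme, and pulling back the Euclidean metric on these cells gives $\mathrm{WFact}(G,h,\mathbf I)$ the structure of a piecewise-Euclidean complex. Topological posets: $\mathcal F(G,g,\mathbf I)$ is the topological disjoint union $\bigsqcup_{h\in[1,g]}\mathrm{WFact}(G,h,\mathbf I)$, ordered by $\mathbf v\subseteq\mathbf u$ iff $\mathbf v(r)\le\mathbf u(r)$ for all $r\in\mathbf I$. Two elements $0^{x_L}s_1^{x_1}\cdots s_k^{x_k}1^{x_R}$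 and $0^{y_L}s_1^{y_1}\cdots s_k^{y_k}1^{y_R}$ are equivalent if $x_i=y_i$ for $1\le i\le k$ and $gx_Rg^{-1}x_L=gy_Rg^{-1}y_L$; $\mathcal F(G,g,\mathbf S)$ is the set of equivalence classes with the quotient topology and the order $[\mathbf v]\le[\mathbf u]$ iff $\mathbf v'\subseteq\mathbf u'$ for some representatives. *)

(* Defs.v *)
From Stdlib Require Import Reals List Arith Lia Sorting.Sorted.
Import ListNotations.
Set Implicit Arguments.
Open Scope R_scope.

Record Group := {
  gcar :> Type;
  gmul : gcar -> gcar -> gcar;
  gone : gcar;
  ginv : gcar -> gcar;
  gmulA : forall a b c, gmul a (gmul b c) = gmul (gmul a b) c;
  gmul1 : forall a, gmul gone a = a;
  gmulV : forall a, gmul (ginv a) a = gone }.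

Section Defs.
Variable G : Group.
Variable X : G -> Prop.

Local Notation "a *g b" := (gmul G a b) (at level 40, left associativity).
Local Notation one := (gone G).

Definition prodl (l : list G) : G := fold_right (gmul G) one l.

Definition conj_closed : Prop :=
  forall x z : G, X x -> X (z *g x *g ginv G z).
Definition generates : Prop :=
  forall z : G, exists l : list (bool * G),
    Forall (fun p : bool * G => X (snd p)) l /\
    prodl (map (fun p : bool * G => if fst p then snd p else ginv G (snd p)) l) = z.

Definition word (w : list G) : Prop := Forall X w.

Definition Mon (h : G) : Prop := exists w, word w /\ prodl w = h.
Definition ell (h : G) (n : nat) : Prop :=
  (exists w, word w /\ prodl w = h /\ length w = n) /\
  (forall w, word w -> prodl w = h -> (n <= length w)%nat).

Definition le (h g : G) : Prop :=
  Mon h /\ exists h', Mon h' /\ h *g h' = g /\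
    exists a b c, ell h a /\ ell h' b /\ ell g c /\ (a + b = c)%nat.
Definition lt (h g : G) : Prop := le h g /\ h <> g.

Definition reduced (h : G) (w : list G) : Prop :=
  word w /\ prodl w = h /\ ell h (length w).

Definition linfact (h xL : G) (xs : list G) (xR : G) : Prop :=
  Forall Mon (xL :: xs ++ [xR]) /\ Forall (fun x => x <> one) xs /\
  (exists ns : list nat, Forall2 ell (xL :: xs ++ [xR]) ns /\
      ell h (list_sum ns)) /\
  prodl (xL :: xs ++ [xR]) = h.

(** weighted linear factorizations: G-multisets u on I = [0,1]
    (encoded as functions R -> G that are trivial outside [0,1]) *)
Definition wfact (h : G) (u : R -> G) : Prop :=
  (forall r, ~ (0 <= r <= 1) -> u r = one) /\
  exists s : list R,
    Sorted Rlt s /\ Forall (fun r => 0 < r < 1) s /\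
    (forall r, 0 < r < 1 -> (u r <> one <-> In r s)) /\
    linfact h (u 0) (map u s) (u 1).

(** the standard orthoscheme {0 <= y_1 <= ... <= y_n <= 1}, coordinates
    indexed 1..n *)
Definition inDelta (n : nat) (y : nat -> R) : Prop :=
  (forall j, (1 <= j <= n)%nat -> 0 <= y j <= 1) /\
  (forall j, (1 <= j < n)%nat -> y j <= y (S j)).

Definition cellopen (n : nat) (P : (nat -> R) -> Prop) : Prop :=
  forall y, inDelta n y -> P y ->
    exists eps, 0 < eps /\
      forall z, inDelta n z ->
        (forall j, (1 <= j <= n)%nat -> Rabs (z j - y j) < eps) -> P z.

(** characteristic map of the (maximal) cell of WFact(G,h,I) given by
    a reduced word w of h: the j-th letter sits at position y_j *)
Definition Phi (w : list G) (y : nat -> R) : R -> G := fun r =>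
  prodl (map (fun j => nth (j - 1) w one)
     (filter (fun j => if Req_EM_T (y j) r then true else false)
             (seq 1 (length w)))).

Variable g : G.

(** points of F(G,g,I) = disjoint union over h in [1,g] of WFact(G,h,I) *)
Definition inF (p : G * (R -> G)) : Prop :=
  le one (fst p) /\ le (fst p) g /\ wfact (fst p) (snd p).

Definition equivF (p q : G * (R -> G)) : Prop :=
  (forall r, 0 < r < 1 -> snd p r = snd q r) /\
  g *g snd p 1 *g ginv G g *g snd p 0 = g *g snd q 1 *g ginv G g *g snd q 0.

(** points of F(G,g,S) : equivalence classes *)
Definition FSpt : Type :=
  { A : G * (R -> G) -> Prop |
      exists p, inF p /\ A = (fun q => inF q /\ equivF p q) }.

(** quotient topology (of the disjoint union of the weak topologies
    of the complexes WFact(G,h,I)) *)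
Definition FSopen (V : FSpt -> Prop) : Prop :=
  forall h w, le one h -> le h g -> reduced h w ->
    cellopen (length w)
      (fun y => exists A : FSpt, V A /\ proj1_sig A (h, Phi w y)).

Definition subF (p q : G * (R -> G)) : Prop :=
  forall r, 0 <= r <= 1 -> le (snd p r) (snd q r).

Definition leFS (A B : FSpt) : Prop :=
  exists p q, proj1_sig A p /\ proj1_sig B q /\ subF p q.

Definition maximalFS (A : FSpt) : Prop :=
  forall B : FSpt, leFS A B -> B = A.

Definition MaxPt : Type := { A : FSpt | maximalFS A }.

Definition MaxOpen (U : MaxPt -> Prop) : Prop :=
  exists V, FSopen V /\ forall a : MaxPt, U a <-> V (proj1_sig a).

Definition maxchain (n : nat) (c : list G) : Prop :=
  length c = S n /\ nth 0 c one = one /\ nth n c one = g /\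
  (forall i, (i <= n)%nat -> le one (nth i c one) /\ le (nth i c one) g) /\
  (forall i, (i < n)%nat -> lt (nth i c one) (nth (S i) c one)).

(** barycentric weight of vertex x_i (placed at the point whose last i
    coordinates are 1) at the point y of the orthoscheme *)
Definition yext (n : nat) (y : nat -> R) (j : nat) : R :=
  if Nat.eqb j 0 then 0 else if Nat.eqb j (S n) then 1 else y j.
Definition bary (n : nat) (y : nat -> R) (i : nat) : R :=
  yext n y (S n - i) - yext n y (n - i).

Definition supp (n : nat) (y : nat -> R) : list nat :=
  filter (fun i => if Rlt_dec 0 (bary n y i) then true else false)
         (seq 0 (S n)).

Fixpoint incs (c : list G) (idx : list nat) : list G :=
  match idx with
  | i :: ((j :: _) as rest) =>
      (ginv G (nth i c one) *g nth j c one) :: incs c rest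
  | _ => []
  end.

(** A point of O_g lies in the interior of the simplex of its support
    chain; K_g identifies two points iff these support chains have the
    same successive increments x_{i-1}^{-1} x_i and the points have the
    same barycentric coordinates.  [Dsc] computes this datum. *)
Definition Dsc (n : nat) (c : list G) (y : nat -> R) : list R * list G :=
  (map (bary n y) (supp n y), incs c (supp n y)).

Definition Kpt : Type :=
  { d : list R * list G |
      exists n c y, ell g n /\ maxchain n c /\ inDelta n y /\ Dsc n c y = d }.

(** quotient of the weak topology of O_g (glued from its maximal
    orthoschemes) *)
Definition Kopen (V : Kpt -> Prop) : Prop :=
  forall n c, ell g n -> maxchain n c ->
    cellopen n (fun y => exists d : Kpt, V d /\ proj1_sig d = Dsc n c y).

End Defs.

Definition homeomorphic (A B : Type) (openA : (A -> Prop) -> Prop)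
  (openB : (B -> Prop) -> Prop) : Prop :=
  exists f : A -> B,
    (exists f' : B -> A, (forall a, f' (f a) = a) /\ (forall b, f (f' b) = b)) /\
    (forall V, openB V -> openA (fun a => V (f a))) /\
    (forall U, openA U -> openB (fun b => exists a, U a /\ f a = b)).

(* Main.v *)
Require Import Defs.
From Stdlib Require Import Reals List Arith Lia Lra Sorting.Sorted Permutation.
From Stdlib Require Import Classical ClassicalEpsilon FunctionalExtensionality PropExtensionality ProofIrrelevance.
Import ListNotations.
Open Scope R_scope.

Section Grp.
Variable G : Group.
Local Notation "a *g b" := (gmul G a b) (at level 40, left associativity).
Local Notation one := (gone G).
Local Notation inv := (ginv G).

Lemma mulV (a : G) : a *g inv a = one.
Proof.
  transitivity ((inv (inv a) *g inv a) *g (a *g inv a)).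
  - now rewrite gmulV, gmul1.
  - rewrite <- gmulA, (gmulA G (inv a) a), gmulV, gmul1. apply gmulV.
Qed.

Lemma mul1r (a : G) : a *g one = a.
Proof. rewrite <- (gmulV G a), gmulA, mulV. apply gmul1. Qed.

Lemma mulKl (a b : G) : inv a *g (a *g b) = b.
Proof. now rewrite gmulA, gmulV, gmul1. Qed.
Lemma mulKr (a b : G) : a *g (inv a *g b) = b.
Proof. now rewrite gmulA, mulV, gmul1. Qed.

Lemma mul_cancel_l (a b c : G) : a *g b = a *g c -> b = c.
Proof. intro H. rewrite <- (mulKl a b), <- (mulKl a c). now rewrite H. Qed.
Lemma mul_cancel_r (a b c : G) : b *g a = c *g a -> b = c.
Proof. intro H. rewrite <- (mul1r b), <- (mul1r c), <- (mulV a), !gmulA. now rewrite H. Qed.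

Lemma inv_uniq (a b : G) : a *g b = one -> b = inv a.
Proof. intro H. apply (mul_cancel_l a). now rewrite H, mulV. Qed.

Lemma invK (a : G) : inv (inv a) = a.
Proof. symmetry. apply inv_uniq. apply gmulV. Qed.

Lemma invM (a b : G) : inv (a *g b) = inv b *g inv a.
Proof. symmetry. apply inv_uniq.
  rewrite <- gmulA, (gmulA G b (inv b)), mulV, gmul1. apply mulV. Qed.

Lemma inv1 : inv one = one.
Proof. symmetry; apply inv_uniq; apply gmul1. Qed.

Lemma div_eq1 (a b : G) : inv a *g b = one -> a = b.
Proof. intro H. rewrite <- (mulKr a b), H. now rewrite mul1r. Qed.

End Grp.
Section Ell.
Variable G : Group.
Variable X : G -> Prop.
Local Notation "a *g b" := (gmul G a b) (at level 40, left associativity).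
Local Notation one := (gone G).
Local Notation inv := (ginv G).
Local Notation ell := (@ell G X).
Local Notation Mon := (@Mon G X).
Local Notation word := (@word G X).
Local Notation prodl := (@prodl G).
Local Notation le := (@le G X).
Local Notation reduced := (@reduced G X).

Lemma prodl_app (l1 l2 : list G) : prodl (l1 ++ l2) = prodl l1 *g prodl l2.
Proof.
  induction l1 as [|a l1 IH]; simpl.
  - now rewrite gmul1.
  - unfold Defs.prodl in *. simpl. rewrite IH. apply gmulA.
Qed.

Lemma prodl_cons (a : G) l : prodl (a :: l) = a *g prodl l.
Proof. reflexivity. Qed.

Lemma prodl_nil : prodl [] = one.
Proof. reflexivity. Qed.

Lemma prodl_concat (ls : list (list G)) : prodl (concat ls) = prodl (map prodl ls).
Proof.
  induction ls as [|l ls IH]; simpl; [reflexivity|].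
  rewrite prodl_app, IH. reflexivity.
Qed.

Lemma word_app w1 w2 : word w1 -> word w2 -> word (w1 ++ w2).
Proof. intros; apply Forall_app; auto. Qed.

Lemma nat_min (P : nat -> Prop) : (exists n, P n) -> exists n, P n /\ forall m, P m -> (n <= m)%nat.
Proof.
  intros [n Hn]. revert Hn. induction n as [n IH] using (well_founded_induction lt_wf).
  intro Hn. destruct (classic (exists m, (m < n)%nat /\ P m)) as [[m [Hm Pm]]|Hno].
  - exact (IH m Hm Pm).
  - exists n. split; auto. intros m Pm. destruct (le_lt_dec n m); auto.
    exfalso; apply Hno; eauto.
Qed.

Lemma ell_exists h : Mon h -> exists n, ell h n.
Proof.
  intros [w [Hw Hp]].
  destruct (nat_min (fun n => exists w, word w /\ prodl w = h /\ length w = n)) as [n [Hn Hmin]].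
  - exists (length w); eauto.
  - exists n. split; auto. intros w' Hw' Hp'. apply Hmin. eauto.
Qed.

Definition ellf (h : G) : nat := epsilon (inhabits 0%nat) (fun n => ell h n).

Lemma ellf_spec h : Mon h -> ell h (ellf h).
Proof. intro H. unfold ellf. apply epsilon_spec. now apply ell_exists. Qed.

Lemma ell_unique h a b : ell h a -> ell h b -> a = b.
Proof.
  intros [[wa [Ha1 [Ha2 Ha3]]] Ma] [[wb [Hb1 [Hb2 Hb3]]] Mb].
  specialize (Ma wb Hb1 Hb2). specialize (Mb wa Ha1 Ha2). lia.
Qed.

Lemma ell_ellf h n : ell h n -> ellf h = n.
Proof.
  intro H. apply (ell_unique h). 2: exact H. apply ellf_spec.
  destruct H as [[w [Hw [Hp _]]] _]. exists w; auto.
Qed.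

Lemma ell_Mon h n : ell h n -> Mon h.
Proof. intros [[w [Hw [Hp _]]] _]. exists w; auto. Qed.

Lemma ell_le h n w : ell h n -> word w -> prodl w = h -> (n <= length w)%nat.
Proof. intros [_ M] Hw Hp. now apply M. Qed.

Lemma ell_wit h n : ell h n -> exists w, word w /\ prodl w = h /\ length w = n.
Proof. intros [H _]. exact H. Qed.

Lemma ell_one : ell one 0.
Proof. split. - exists []. repeat split. constructor. - intros; lia. Qed.

Lemma ell0_one h : ell h 0 -> h = one.
Proof. intros H. destruct (ell_wit _ _ H) as [w [_ [Hp Hl]]].
  destruct w; [|discriminate]. now rewrite <- Hp. Qed.

Lemma Mon_one : Mon one.
Proof. exists []. split; [constructor|reflexivity]. Qed.

Lemma Mon_mul a b : Mon a -> Mon b -> Mon (a *g b).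
Proof. intros [wa [Ha Pa]] [wb [Hb Pb]]. exists (wa ++ wb).
  split; [now apply word_app|]. now rewrite prodl_app, Pa, Pb. Qed.

Lemma ellf_one : ellf one = 0%nat.
Proof. apply ell_ellf, ell_one. Qed.

Lemma ellf_zero h : Mon h -> ellf h = 0%nat -> h = one.
Proof. intros M E. apply ell0_one. rewrite <- E. now apply ellf_spec. Qed.

Lemma Mon_prodl L : Forall Mon L -> Mon (prodl L).
Proof. induction 1; [apply Mon_one|]. rewrite prodl_cons. now apply Mon_mul. Qed.

Lemma subadd_wit L : Forall Mon L ->
  exists ws, word ws /\ prodl ws = prodl L /\ length ws = list_sum (map ellf L).
Proof.
  induction 1 as [|a L Ha HL IH].
  - exists []. repeat split. constructor.
  - destruct IH as [ws [W1 [W2 W3]]].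
    destruct (ell_wit _ _ (ellf_spec a Ha)) as [wa [A1 [A2 A3]]].
    exists (wa ++ ws). split; [now apply word_app|]. split.
    + rewrite prodl_app, A2, W2. reflexivity.
    + rewrite length_app, A3, W3. reflexivity.
Qed.

Lemma subadd L m : Forall Mon L -> ell (prodl L) m -> (m <= list_sum (map ellf L))%nat.
Proof.
  intros HL Hm. destruct (subadd_wit L HL) as [ws [W1 [W2 W3]]].
  rewrite <- W3. eapply ell_le; eauto.
Qed.

Lemma ellf_mul_le a b : Mon a -> Mon b -> (ellf (a *g b) <= ellf a + ellf b)%nat.
Proof.
  intros Ha Hb. pose proof (subadd [a;b] (ellf (a *g b))) as H.
  simpl in H. rewrite Nat.add_0_r in H. apply H.
  - repeat constructor; auto.
  - unfold Defs.prodl; simpl. rewrite mul1r. apply ellf_spec. now apply Mon_mul.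
Qed.

Lemma word_Mon w : word w -> Mon (prodl w).
Proof. intro H. exists w. auto. Qed.

Lemma ellf_word w : word w -> (ellf (prodl w) <= length w)%nat.
Proof. intro H. eapply ell_le; eauto. apply ellf_spec. now apply word_Mon. Qed.

Lemma reduced_sub h w1 w2 w3 : reduced h (w1 ++ w2 ++ w3) -> reduced (prodl w2) w2.
Proof.
  intros [W [P E]].
  pose proof W as W'. unfold Defs.word in W'.
  apply Forall_app in W' as [W1 W23]. apply Forall_app in W23 as [W2 W3].
  split; [auto|split; [reflexivity|]].
  pose proof (ellf_spec _ (word_Mon _ W2)) as E2.
  destruct (ell_wit _ _ E2) as [w2' [A1 [A2 A3]]].
  assert (ellf (prodl w2) = length w2).
  { apply Nat.le_antisymm. apply ellf_word; auto.
    assert (Hle : (length (w1 ++ w2 ++ w3) <= length (w1 ++ w2' ++ w3))%nat).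
    { eapply ell_le. exact E. repeat apply word_app; auto.
      rewrite <- P, !prodl_app, A2. reflexivity. }
    rewrite !length_app in Hle. lia. }
  rewrite <- H. exact E2.
Qed.

Lemma le_refl h : Mon h -> le h h.
Proof.
  intro M. split; auto. exists one. split; [apply Mon_one|]. split; [apply mul1r|].
  exists (ellf h), 0%nat, (ellf h).
  split; [apply ellf_spec; auto|]. split; [apply ell_one|]. split; [apply ellf_spec; auto|]. lia.
Qed.

Lemma le_one h : Mon h -> le one h.
Proof.
  intro M. split; [apply Mon_one|]. exists h. split; auto. split; [apply gmul1|].
  exists 0%nat, (ellf h), (ellf h).
  split; [apply ell_one|]. split; [apply ellf_spec; auto|]. split; [apply ellf_spec; auto|]. lia.
Qed.

Lemma le_Mon_l h k : le h k -> Mon h.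
Proof. intros [M _]; auto. Qed.
Lemma le_Mon_r h k : le h k -> Mon k.
Proof. intros [M [h' [M' [E _]]]]. rewrite <- E. now apply Mon_mul. Qed.

Lemma le_inv h k : le h k ->
  Mon (inv h *g k) /\ ellf k = (ellf h + ellf (inv h *g k))%nat.
Proof.
  intros [M [h' [M' [E [a [b [c [Ha [Hb [Hc Habc]]]]]]]]]].
  assert (h' = inv h *g k) as ->. { rewrite <- E. now rewrite mulKl. }
  split; auto. rewrite (ell_ellf _ _ Ha), (ell_ellf _ _ Hb), (ell_ellf _ _ Hc). lia.
Qed.

Lemma le_intro h k : Mon h -> Mon (inv h *g k) ->
  ellf k = (ellf h + ellf (inv h *g k))%nat -> le h k.
Proof.
  intros M1 M2 E. split; auto. exists (inv h *g k). split; auto. split; [apply mulKr|].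
  assert (Mk : Mon k) by (rewrite <- (mulKr G h k); now apply Mon_mul).
  exists (ellf h), (ellf (inv h *g k)), (ellf k).
  split; [apply ellf_spec; auto|]. split; [apply ellf_spec; auto|]. split; [apply ellf_spec; auto|]. lia.
Qed.

End Ell.
Section Abs.
Variable G : Group.
Local Notation "a *g b" := (gmul G a b) (at level 40, left associativity).
Local Notation one := (gone G).
Local Notation inv := (ginv G).
Local Notation prodl := (@prodl G).

Definition Rsum (l : list R) : R := fold_right Rplus 0 l.

Fixpoint Dv (ts : list R) (as_ : list G) (r : R) : G :=
  match ts, as_ with
  | t :: ts', a :: as' => if Req_EM_T r t then a else Dv ts' as' (r - t)
  | _, _ => one
  end.

Lemma Dv_neg ts as_ r : Forall (fun t => 0 < t) ts -> r <= 0 -> Dv ts as_ r = one.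
Proof.
  intros H; revert as_ r; induction H as [|t ts Ht Hts IH]; intros as_ r Hr; simpl; auto.
  destruct as_ as [|a as_]; auto. destruct (Req_EM_T r t); [lra|]. apply IH. lra.
Qed.

Lemma Dv_cons t ts a as_ r : Dv (t :: ts) (a :: as_) r = if Req_EM_T r t then a else Dv ts as_ (r - t).
Proof. reflexivity. Qed.

Lemma Rsum_nonneg ts : Forall (fun t => 0 < t) ts -> 0 <= Rsum ts.
Proof. induction 1; simpl; lra. Qed.

Lemma Rsum_pos t ts : Forall (fun t => 0 < t) (t :: ts) -> t <= Rsum (t :: ts) /\ 0 < Rsum (t :: ts).
Proof. intro H. inversion H; subst. pose proof (Rsum_nonneg _ H3). simpl. lra. Qed.

Lemma Dv_uniq : forall ts as_ ts' as' L,
  Forall (fun t => 0 < t) ts -> Forall (fun t => 0 < t) ts' ->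
  Rsum ts = L -> Rsum ts' = L ->
  length ts = S (length as_) -> length ts' = S (length as') ->
  Forall (fun a => a <> one) as_ -> Forall (fun a => a <> one) as' ->
  (forall r, 0 < r < L -> Dv ts as_ r = Dv ts' as' r) -> ts = ts' /\ as_ = as'.
Proof.
  induction ts as [|t ts IH]; intros as_ ts' as' L P P' Su Su' Ln Ln' N N' E.
  - discriminate.
  - destruct ts' as [|t' ts']; [discriminate|].
    pose proof (Forall_inv P) as Pt. pose proof (Forall_inv_tail P) as Pts.
    pose proof (Forall_inv P') as Pt'. pose proof (Forall_inv_tail P') as Pts'.
    simpl in Ln, Ln', Su, Su'.
    destruct as_ as [|a as_]; destruct as' as [|a' as'].
    + destruct ts; [|discriminate]. destruct ts'; [|discriminate].
      simpl in Su, Su'. split; [f_equal; lra|auto].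
    + destruct ts; [|discriminate]. simpl in Su. destruct ts' as [|t'' ts'']; [discriminate|].
      pose proof (Rsum_pos _ _ Pts'). exfalso.
      pose proof (Forall_inv N') as Na'.
      specialize (E t'). simpl in E. destruct (Req_EM_T t' t'); [|congruence].
      apply Na'. rewrite <- E. reflexivity. lra.
    + destruct ts' ; [|discriminate]. simpl in Su'. destruct ts as [|t'' ts'']; [discriminate|].
      pose proof (Rsum_pos _ _ Pts). exfalso.
      pose proof (Forall_inv N) as Na.
      specialize (E t). simpl in E. destruct (Req_EM_T t t); [|congruence].
      apply Na. rewrite E. reflexivity. lra.
    + pose proof (Forall_inv N) as Na. pose proof (Forall_inv_tail N) as Nas.
      pose proof (Forall_inv N') as Na'. pose proof (Forall_inv_tail N') as Nas'.
      injection Ln as Ln. injection Ln' as Ln'.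
      destruct ts as [|t2 ts]; [discriminate|]. destruct ts' as [|t2' ts']; [discriminate|].
      pose proof (Rsum_pos _ _ Pts). pose proof (Rsum_pos _ _ Pts').
      destruct (total_order_T t t') as [[Hlt|Heq]|Hgt].
      * exfalso. specialize (E t). rewrite !Dv_cons in E.
        destruct (Req_EM_T t t); [|congruence]. destruct (Req_EM_T t t'); [lra|].
        rewrite Dv_neg in E; [|auto|lra]. apply Na. apply E. lra.
      * subst t'. assert (a = a').
        { specialize (E t). rewrite !Dv_cons in E. destruct (Req_EM_T t t); [|congruence]. apply E. lra. }
        subst a'.
        destruct (IH as_ (t2' :: ts') as' (Rsum (t2 :: ts))) as [H1 H2]; auto.
        -- lra.
        -- intros r Hr. specialize (E (r + t)). rewrite !Dv_cons in E.
           destruct (Req_EM_T (r + t) t); [lra|].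
           replace (r + t - t) with r in E by ring. apply E. lra.
        -- rewrite H1, H2. auto.
      * exfalso. specialize (E t'). rewrite !Dv_cons in E.
        destruct (Req_EM_T t' t'); [|congruence]. destruct (Req_EM_T t' t); [lra|].
        rewrite Dv_neg in E; [|auto|lra]. apply Na'. symmetry. apply E. lra.
Qed.

Record Q4 := mkQ4 { qa : R; qb : R; qx : G; qy : G }.

Fixpoint pairdiff (l : list G) : list G :=
  match l with
  | a :: ((b :: _) as rest) => (inv a *g b) :: pairdiff rest
  | _ => []
  end.

Lemma pairdiff_len l : length (pairdiff l) = pred (length l).
Proof.
  induction l as [|a l IH]; auto. destruct l as [|b l]; auto.
  simpl in IH |- *. rewrite IH. reflexivity.
Qed.

Definition fltQ (l : list Q4) := filter (fun q => if Rlt_dec (qa q) (qb q) then true else false) l.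
Definition tsQ l := map (fun q => qb q - qa q) (fltQ l).
Definition asQ l := pairdiff (map qx (fltQ l)).
Definition UQ (l : list Q4) r := prodl (map (fun q => inv (qx q) *g qy q)
  (filter (fun q => if Req_EM_T (qb q) r then true else false) l)).

Fixpoint chainAB (al be : R) (l : list Q4) : Prop :=
  match l with
  | [] => al = be
  | q :: l' => qa q = al /\ qa q <= qb q /\ chainAB (qb q) be l'
  end.
Fixpoint chainXY (x : G) (l : list Q4) : Prop :=
  match l with
  | [] => True
  | q :: l' => qx q = x /\ chainXY (qy q) l'
  end.

Lemma chainAB_bge al be l : chainAB al be l -> al <= be /\ Forall (fun q => al <= qb q) l.
Proof.
  revert al; induction l as [|q l IH]; intros al H; simpl in H.
  - split; [lra|constructor].
  - destruct H as [H1 [H2 H3]]. destruct (IH _ H3) as [A B]. split; [lra|].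
    constructor; [lra|]. eapply Forall_impl; [|exact B]. simpl; intros; lra.
Qed.

Lemma chainAB_nil al be l : chainAB al be l -> fltQ l = [] -> al = be /\ Forall (fun q => qb q = be) l.
Proof.
  revert al; induction l as [|q l IH]; intros al H F; simpl in H.
  - split; auto.
  - destruct H as [H1 [H2 H3]]. unfold fltQ in F; simpl in F.
    destruct (Rlt_dec (qa q) (qb q)); [discriminate|].
    destruct (IH _ H3 F) as [A B]. split; [lra|]. constructor; auto; lra.
Qed.

Lemma UQ_cons q l r : UQ (q :: l) r =
  if Req_EM_T (qb q) r then (inv (qx q) *g qy q) *g UQ l r else UQ l r.
Proof. unfold UQ; simpl. destruct (Req_EM_T (qb q) r); reflexivity. Qed.

Lemma UQ_none l r : Forall (fun q => qb q <> r) l -> UQ l r = one.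
Proof.
  induction 1; [reflexivity|]. rewrite UQ_cons. destruct (Req_EM_T (qb x) r); [congruence|auto].
Qed.

Lemma TEL : forall l b be y f0 rest, chainAB b be l -> chainXY y l -> fltQ l = f0 :: rest ->
  UQ l b = inv y *g qx f0.
Proof.
  induction l as [|q l IH]; intros b be y f0 rest H1 H2 F; [discriminate|].
  simpl in H1, H2. destruct H1 as [A1 [A2 A3]]. destruct H2 as [B1 B2].
  unfold fltQ in F; simpl in F. rewrite UQ_cons.
  destruct (Rlt_dec (qa q) (qb q)).
  - injection F as <- _. destruct (Req_EM_T (qb q) b); [lra|].
    rewrite UQ_none. rewrite B1, gmulV. reflexivity.
    destruct (chainAB_bge _ _ _ A3) as [_ C]. eapply Forall_impl; [|exact C]. simpl; intros; lra.
  - destruct (Req_EM_T (qb q) b); [|lra].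
    rewrite e in A3. rewrite (IH b be (qy q) f0 rest A3 B2 F). rewrite B1.
    rewrite <- gmulA, mulKr. reflexivity.
Qed.

Lemma fltQ_lt q l : qa q < qb q -> fltQ (q :: l) = q :: fltQ l.
Proof. intro H. unfold fltQ; simpl. destruct (Rlt_dec (qa q) (qb q)); [reflexivity|lra]. Qed.
Lemma fltQ_nlt q l : ~ qa q < qb q -> fltQ (q :: l) = fltQ l.
Proof. intro H. unfold fltQ; simpl. destruct (Rlt_dec (qa q) (qb q)); [lra|reflexivity]. Qed.

Lemma tsQ_pos l : Forall (fun t => 0 < t) (tsQ l).
Proof.
  unfold tsQ. apply Forall_map. apply Forall_forall. intros q' Hq'.
  unfold fltQ in Hq'. apply filter_In in Hq' as [_ Hq'].
  destruct (Rlt_dec (qa q') (qb q')); [lra|discriminate].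
Qed.

Lemma ABS : forall l al be x, chainAB al be l -> chainXY x l ->
  forall r, al < r < be -> Dv (tsQ l) (asQ l) (r - al) = UQ l r.
Proof.
  induction l as [|q l IH]; intros al be x H1 H2 r Hr; simpl in H1.
  - lra.
  - destruct H1 as [A1 [A2 A3]]. destruct H2 as [B1 B2].
    rewrite UQ_cons.
    destruct (Rlt_dec (qa q) (qb q)) as [Hlt|Hnlt].
    + unfold tsQ, asQ. rewrite (fltQ_lt _ _ Hlt).
      destruct (fltQ l) as [|f0 rest] eqn:F.
      * simpl. destruct (chainAB_nil _ _ _ A3 F) as [C1 C2].
        destruct (Req_EM_T (qb q) r); [lra|]. rewrite UQ_none; auto.
        eapply Forall_impl; [|exact C2]. simpl; intros; lra.
      * change (map (fun q0 => qb q0 - qa q0) (q :: f0 :: rest)) with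
          ((qb q - qa q) :: map (fun q0 => qb q0 - qa q0) (f0 :: rest)).
        change (pairdiff (map qx (q :: f0 :: rest))) with
          ((inv (qx q) *g qx f0) :: pairdiff (map qx (f0 :: rest))).
        rewrite Dv_cons. destruct (Req_EM_T (r - al) (qb q - qa q)) as [E|E].
        -- destruct (Req_EM_T (qb q) r); [|lra]. subst r.
           rewrite (TEL l (qb q) be (qy q) f0 rest A3 B2 F). rewrite B1.
           rewrite <- gmulA, mulKr. reflexivity.
        -- destruct (Req_EM_T (qb q) r); [lra|].
           replace (r - al - (qb q - qa q)) with (r - qb q) by lra.
           destruct (Rlt_dec (qb q) r).
           ++ pose proof (IH (qb q) be (qy q) A3 B2 r) as IH'.
              unfold tsQ, asQ in IH'. rewrite F in IH'. apply IH'. lra.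
           ++ rewrite Dv_neg; [ | | lra].
              ** rewrite UQ_none; auto. destruct (chainAB_bge _ _ _ A3) as [_ C].
                 eapply Forall_impl; [|exact C]. simpl; intros; lra.
              ** pose proof (tsQ_pos l) as Hp. unfold tsQ in Hp. rewrite F in Hp. exact Hp.
    + assert (qa q = qb q) by lra.
      destruct (Req_EM_T (qb q) r); [lra|].
      rewrite <- (IH (qb q) be (qy q) A3 B2 r); [|lra]. unfold tsQ, asQ.
      rewrite (fltQ_nlt _ _ Hnlt). f_equal. lra.
Qed.

Lemma tsQ_sum : forall l al be, chainAB al be l -> Rsum (tsQ l) = be - al.
Proof.
  induction l as [|q l IH]; intros al be H; simpl in H.
  - simpl. lra.
  - destruct H as [A1 [A2 A3]]. unfold tsQ, fltQ; simpl.
    destruct (Rlt_dec (qa q) (qb q)); simpl; fold (fltQ l); fold (tsQ l);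
      rewrite (IH _ _ A3); lra.
Qed.

Lemma tsQ_len l : length (tsQ l) = S (length (asQ l)) \/ fltQ l = [].
Proof.
  unfold tsQ, asQ. rewrite pairdiff_len, !length_map.
  destruct (fltQ l); [right; auto|left; auto].
Qed.

End Abs.
Section Inst.
Variable G : Group.
Variable X : G -> Prop.
Variable g : G.
Local Notation "a *g b" := (gmul G a b) (at level 40, left associativity).
Local Notation one := (gone G).
Local Notation inv := (ginv G).
Local Notation prodl := (@prodl G).

Definition ev (n : nat) (y : nat -> R) (i : nat) : R :=
  if Nat.eqb i 0 then 0 else if Nat.eqb i (S n) then 1 else 1 - y (S n - i)%nat.
Definition revy (n : nat) (y : nat -> R) (j : nat) : R := 1 - y (S n - j)%nat.
Definition wc (n : nat) (c : list G) : list G :=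
  map (fun i => inv (nth i c one) *g nth (S i) c one) (seq 0 n).
Definition Qc (n : nat) (c : list G) (y : nat -> R) : list (Q4 G) :=
  map (fun i => mkQ4 G (ev n y i) (ev n y (S i)) (nth i c one) (nth (S i) c one)) (seq 0 (S n)).

Lemma wc_len n c : length (wc n c) = n.
Proof. unfold wc. rewrite length_map, length_seq. reflexivity. Qed.

Lemma nth_map_seq {A : Type} (f : nat -> A) k n i d : (i < n)%nat -> nth i (map f (seq k n)) d = f (k + i)%nat.
Proof. intro H. rewrite (nth_indep _ d (f 0%nat)) by (rewrite length_map, length_seq; auto).
  rewrite map_nth, seq_nth; auto. Qed.

Lemma wc_nth n c i : (i < n)%nat -> nth i (wc n c) one = inv (nth i c one) *g nth (S i) c one.
Proof. intro H. unfold wc. rewrite nth_map_seq; auto. Qed.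

Lemma bary_ev n y i : (i <= n)%nat -> bary n y i = ev n y (S i) - ev n y i.
Proof.
  intro H. unfold bary, yext, ev.
  destruct (Nat.eqb_spec (S n - i) 0); [lia|].
  destruct (Nat.eqb_spec (S n - i) (S n)); destruct (Nat.eqb_spec (n - i) 0);
  destruct (Nat.eqb_spec (n - i) (S n)); destruct (Nat.eqb_spec (S i) 0);
  destruct (Nat.eqb_spec (S i) (S n)); destruct (Nat.eqb_spec i 0);
  destruct (Nat.eqb_spec i (S n)); try lia; subst; simpl.
  all: try (replace (S n - S n)%nat with 0%nat by lia).
  all: try replace (n - 0)%nat with n by lia.
  all: try replace (S n - S i)%nat with (n - i)%nat by lia.
  all: try lra.
Qed.

Lemma ev_mono n y i : inDelta n y -> (i <= n)%nat -> ev n y i <= ev n y (S i).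
Proof.
  intros [H1 H2] Hi. unfold ev.
  destruct (Nat.eqb_spec i 0); destruct (Nat.eqb_spec i (S n));
  destruct (Nat.eqb_spec (S i) 0); destruct (Nat.eqb_spec (S i) (S n)); try lia; try lra.
  - subst. replace (S n - 1)%nat with n by lia. assert (0 <= y n <= 1) by (apply H1; lia). lra.
  - assert (i = n) by lia. subst. replace (S n - n)%nat with 1%nat by lia. assert (0 <= y 1%nat <= 1) by (apply H1; lia). lra.
  - replace (S n - i)%nat with (S (n - i)) by lia. replace (S n - S i)%nat with (n - i)%nat by lia.
    assert (y (n - i)%nat <= y (S (n - i))) by (apply H2; lia). lra.
Qed.

Lemma chainAB_Qc n c y k m : inDelta n y -> (k + m <= S n)%nat ->
  chainAB G (ev n y k) (ev n y (k + m))
    (map (fun i => mkQ4 G (ev n y i) (ev n y (S i)) (nth i c one) (nth (S i) c one)) (seq k m)).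
Proof.
  intros HD. revert k; induction m as [|m IH]; intros k Hk; simpl.
  - now rewrite Nat.add_0_r.
  - split; [reflexivity|]. split; [apply ev_mono; auto; lia|].
    replace (k + S m)%nat with (S k + m)%nat by lia. apply IH. lia.
Qed.

Lemma chainXY_Qc n c y k m :
  chainXY G (nth k c one)
    (map (fun i => mkQ4 G (ev n y i) (ev n y (S i)) (nth i c one) (nth (S i) c one)) (seq k m)).
Proof.
  revert k; induction m as [|m IH]; intros k; simpl; auto.
Qed.

Lemma incs_pairdiff (c : list G) idx : incs G c idx = pairdiff G (map (fun i => nth i c one) idx).
Proof.
  induction idx as [|i idx IH]; [reflexivity|]. destruct idx as [|j idx]; [reflexivity|].
  simpl. f_equal. exact IH.
Qed.

Lemma Dsc_eq n c y : Dsc G n c y = (tsQ G (Qc n c y), asQ G (Qc n c y)).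
Proof.
  unfold Dsc, tsQ, asQ, fltQ, Qc, supp. rewrite incs_pairdiff.
  rewrite filter_map_swap, !map_map. cbn [qa qb qx qy].
  assert (E : filter (fun i => if Rlt_dec 0 (bary n y i) then true else false) (seq 0 (S n)) =
              filter (fun i => if Rlt_dec (ev n y i) (ev n y (S i)) then true else false) (seq 0 (S n))).
  { apply filter_ext_in. intros i Hi. apply in_seq in Hi. rewrite bary_ev by lia.
    destruct (Rlt_dec 0 (ev n y (S i) - ev n y i)); destruct (Rlt_dec (ev n y i) (ev n y (S i)));
      auto; lra. }
  rewrite E. f_equal. apply map_ext_in. intros i Hi. apply filter_In in Hi as [Hi _].
  apply in_seq in Hi. apply bary_ev. lia.
Qed.

Lemma Phi_UQ n c y r : 0 < r < 1 -> Phi G (wc n c) (revy n y) r = UQ G (Qc n c y) r.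
Proof.
  intro Hr. unfold Phi, UQ, Qc. rewrite wc_len.
  rewrite <- seq_shift, filter_map_swap, map_map.
  rewrite filter_map_swap, map_map. cbn [qa qb qx qy].
  rewrite seq_S, filter_app. cbn [filter]. rewrite Nat.add_0_l.
  assert (E1 : ev n y (S n) = 1) by (unfold ev; rewrite Nat.eqb_refl; reflexivity).
  rewrite E1. destruct (Req_EM_T 1 r); [lra|]. rewrite app_nil_r.
  assert (E : filter (fun i => if Req_EM_T (revy n y (S i)) r then true else false) (seq 0 n) =
              filter (fun i => if Req_EM_T (ev n y (S i)) r then true else false) (seq 0 n)).
  { apply filter_ext_in. intros i Hi. apply in_seq in Hi.
    assert (revy n y (S i) = ev n y (S i)).
    { unfold revy, ev. destruct (Nat.eqb_spec (S i) 0); [lia|].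
      destruct (Nat.eqb_spec (S i) (S n)); [lia|]. reflexivity. }
    rewrite H. reflexivity. }
  rewrite E. f_equal. apply map_ext_in. intros i Hi. apply filter_In in Hi as [Hi _].
  apply in_seq in Hi. simpl. rewrite Nat.sub_0_r. apply wc_nth. lia.
Qed.

Lemma pairdiff_nontriv (f : nat -> G) idx : NoDup idx ->
  (forall i j, In i idx -> In j idx -> f i = f j -> i = j) ->
  Forall (fun a => a <> one) (pairdiff G (map f idx)).
Proof.
  induction idx as [|i idx IH]; intros ND Inj; [constructor|].
  destruct idx as [|j idx]; [constructor|].
  simpl. constructor.
  - intro E. apply div_eq1 in E. apply Inj in E; simpl; auto. subst.
    inversion ND; subst. apply H1. simpl; auto.
  - apply IH. inversion ND; auto. intros i' j' Hi Hj. apply Inj; simpl; auto.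
Qed.

Lemma K2 n c y : inDelta n y ->
  (forall i j, (i <= n)%nat -> (j <= n)%nat -> nth i c one = nth j c one -> i = j) ->
  Forall (fun t => 0 < t) (fst (Dsc G n c y)) /\ Rsum (fst (Dsc G n c y)) = 1 /\
  length (fst (Dsc G n c y)) = S (length (snd (Dsc G n c y))) /\
  Forall (fun a => a <> one) (snd (Dsc G n c y)) /\
  (forall r, 0 < r < 1 -> Dv G (fst (Dsc G n c y)) (snd (Dsc G n c y)) r =
                          Phi G (wc n c) (revy n y) r).
Proof.
  intros HD Inj.
  assert (CA : chainAB G 0 1 (Qc n c y)).
  { pose proof (chainAB_Qc n c y 0 (S n) HD (le_n _)) as H.
    assert (E0 : ev n y 0 = 0) by reflexivity.
    assert (E1 : ev n y (0 + S n) = 1) by (unfold ev; simpl; rewrite Nat.eqb_refl; reflexivity).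
    rewrite E0, E1 in H. exact H. }
  assert (CX := chainXY_Qc n c y 0 (S n)).
  assert (Hsum : Rsum (tsQ G (Qc n c y)) = 1).
  { rewrite (tsQ_sum G _ _ _ CA). lra. }
  split; [|split; [|split; [|split]]].
  - rewrite Dsc_eq. apply tsQ_pos.
  - rewrite Dsc_eq. exact Hsum.
  - rewrite Dsc_eq. simpl. destruct (tsQ_len G (Qc n c y)) as [H|H]; auto.
    exfalso. unfold tsQ in Hsum. rewrite H in Hsum. simpl in Hsum. lra.
  - unfold Dsc. simpl. rewrite incs_pairdiff. apply pairdiff_nontriv.
    + apply NoDup_filter, seq_NoDup.
    + intros i j Hi Hj. apply filter_In in Hi as [Hi _]. apply filter_In in Hj as [Hj _].
      apply in_seq in Hi. apply in_seq in Hj. apply Inj; lia.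
  - intros r Hr. rewrite Dsc_eq. simpl. rewrite Phi_UQ by auto.
    rewrite <- (ABS G _ 0 1 _ CA CX r Hr). f_equal. lra.
Qed.

Local Notation ell := (@ell G X).
Local Notation Mon := (@Mon G X).
Local Notation word := (@word G X).
Local Notation le := (@le G X).
Local Notation lt := (@lt G X).
Local Notation reduced := (@reduced G X).
Local Notation ellf := (@ellf G X).
Local Notation maxchain := (@maxchain G X g).

Lemma maxchain_ell n c : ell g n -> maxchain n c ->
  forall i, (i <= n)%nat -> ell (nth i c one) i.
Proof.
  intros Eg [Hlen [H0 [Hn [Hle Hlt]]]].
  set (k := fun i => ellf (nth i c one)).
  assert (Mc : forall i, (i <= n)%nat -> Mon (nth i c one)).
  { intros i Hi. destruct (Hle i Hi) as [H1 _]. eapply le_Mon_r; eauto. }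
  assert (Step : forall i, (i < n)%nat -> (S (k i) <= k (S i))%nat).
  { intros i Hi. destruct (Hlt i Hi) as [L Ne]. destruct (le_inv G X _ _ L) as [M E].
    unfold k. rewrite E. destruct (ellf (inv (nth i c one) *g nth (S i) c one)) eqn:Z; [|lia].
    exfalso. apply ellf_zero in Z; auto. apply Ne. apply div_eq1. exact Z. }
  assert (Inc : forall j i, (i + j <= n)%nat -> (k i + j <= k (i + j))%nat).
  { induction j as [|j IH]; intros i Hij. rewrite !Nat.add_0_r; lia.
    specialize (IH i ltac:(lia)). specialize (Step (i + j)%nat ltac:(lia)).
    replace (i + S j)%nat with (S (i + j)) by lia. lia. }
  assert (K0 : k 0%nat = 0%nat). { unfold k. rewrite H0. apply ellf_one. }
  assert (Kn : k n = n). { unfold k. rewrite Hn. apply ell_ellf; auto. }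
  intros i Hi. assert (k i = i).
  { pose proof (Inc i 0%nat ltac:(lia)). pose proof (Inc (n - i)%nat i ltac:(lia)).
    replace (i + (n - i))%nat with n in * by lia. simpl in *. lia. }
  pose proof (ellf_spec G X _ (Mc i Hi)) as H1. unfold k in H. rewrite H in H1. exact H1.
Qed.

Lemma maxchain_inj n c : ell g n -> maxchain n c ->
  forall i j, (i <= n)%nat -> (j <= n)%nat -> nth i c one = nth j c one -> i = j.
Proof.
  intros Eg Mc i j Hi Hj E. pose proof (maxchain_ell n c Eg Mc i Hi).
  pose proof (maxchain_ell n c Eg Mc j Hj). rewrite E in H. eapply ell_unique; eauto.
Qed.

Lemma prodl_tele (f : nat -> G) k m :
  prodl (map (fun i => inv (f i) *g f (S i)) (seq k m)) = inv (f k) *g f (k + m)%nat.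
Proof.
  revert k; induction m as [|m IH]; intros k.
  - rewrite Nat.add_0_r. simpl. symmetry. apply gmulV.
  - cbn [seq map]. rewrite prodl_cons, IH. rewrite <- gmulA, mulKr.
    replace (S k + m)%nat with (k + S m)%nat by lia. reflexivity.
Qed.

Lemma ell1_X x : ell x 1 -> X x.
Proof.
  intro H. destruct (ell_wit G X _ _ H) as [w [W [P L]]].
  destruct w as [|a [|b w]]; try discriminate. unfold Defs.prodl in P; simpl in P.
  rewrite mul1r in P. subst. inversion W; auto.
Qed.

Lemma maxchain_reduced n c : ell g n -> maxchain n c -> reduced g (wc n c).
Proof.
  intros Eg Mc. pose proof Mc as [Hlen [H0 [Hn [Hle Hlt]]]].
  split; [|split].
  - unfold Defs.word, wc. apply Forall_forall. intros x Hx. apply in_map_iff in Hx as [i [<- Hi]].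
    apply in_seq in Hi. apply ell1_X.
    destruct (le_inv G X _ _ (proj1 (Hlt i ltac:(lia)))) as [M E].
    pose proof (ell_ellf G X _ _ (maxchain_ell n c Eg Mc i ltac:(lia))).
    pose proof (ell_ellf G X _ _ (maxchain_ell n c Eg Mc (S i) ltac:(lia))).
    replace 1%nat with (ellf (inv (nth i c one) *g nth (S i) c one)) by lia.
    apply ellf_spec; auto.
  - unfold wc. rewrite (prodl_tele (fun i => nth i c one)). simpl. rewrite H0, Hn, inv1. apply gmul1.
  - rewrite wc_len. auto.
Qed.

Lemma firstn_snoc (w : list G) i d : (i < length w)%nat -> firstn (S i) w = firstn i w ++ [nth i w d].
Proof.
  revert i; induction w as [|a w IH]; intros i Hi; simpl in Hi; [lia|].
  destruct i; [reflexivity|]. simpl. f_equal. apply IH. lia.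
Qed.

Definition cw (w : list G) : list G := map (fun i => prodl (firstn i w)) (seq 0 (S (length w))).

Lemma reduced_word h w : reduced h w -> word w.
Proof. intros [W _]; auto. Qed.

Lemma reduced_firstn w i : reduced g w -> ell (prodl (firstn i w)) (length (firstn i w)).
Proof.
  intro R. rewrite <- (firstn_skipn i w) in R.
  pose proof (reduced_sub G X g [] (firstn i w) (skipn i w) R) as [_ [_ E]]. exact E.
Qed.

Lemma reduced_skipn w i : reduced g w -> ell (prodl (skipn i w)) (length (skipn i w)).
Proof.
  intro R. rewrite <- (firstn_skipn i w), <- (app_nil_r (skipn i w)) in R.
  pose proof (reduced_sub G X g (firstn i w) (skipn i w) [] R) as [_ [_ E]]. exact E.
Qed.

Lemma reduced_nth w i : reduced g w -> (i < length w)%nat -> ell (nth i w one) 1.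
Proof.
  intros R Hi. assert (Ew : w = firstn i w ++ [nth i w one] ++ skipn (S i) w).
  { rewrite app_assoc, <- firstn_snoc by auto. symmetry. apply firstn_skipn. }
  rewrite Ew in R. pose proof (reduced_sub G X g _ _ _ R) as [_ [_ E]].
  unfold Defs.prodl in E; simpl in E. rewrite mul1r in E. exact E.
Qed.

Lemma cw_nth w i : (i <= length w)%nat -> nth i (cw w) one = prodl (firstn i w).
Proof. intro H. unfold cw. rewrite nth_map_seq by lia. reflexivity. Qed.

Lemma cw_maxchain w : reduced g w -> maxchain (length w) (cw w) /\ wc (length w) (cw w) = w.
Proof.
  intro R. pose proof R as [W [P E]]. set (n := length w).
  assert (Ef : forall i, (i <= n)%nat -> ellf (prodl (firstn i w)) = i).
  { intros i Hi. rewrite (ell_ellf G X _ _ (reduced_firstn w i R)). rewrite length_firstn. lia. }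
  assert (Es : forall i, (i <= n)%nat -> ellf (prodl (skipn i w)) = (n - i)%nat).
  { intros i Hi. rewrite (ell_ellf G X _ _ (reduced_skipn w i R)). rewrite length_skipn. lia. }
  assert (Wf : forall i, word (firstn i w)).
  { intro i. rewrite <- (firstn_skipn i w) in W. apply Forall_app in W as [W1 _]; auto. }
  assert (Wsk : forall i, word (skipn i w)).
  { intro i. rewrite <- (firstn_skipn i w) in W. apply Forall_app in W as [_ W2]; auto. }
  assert (Snoc : forall i, (i < n)%nat -> prodl (firstn (S i) w) = prodl (firstn i w) *g nth i w one).
  { intros i Hi. rewrite (firstn_snoc w i one) by auto. rewrite prodl_app.
    unfold Defs.prodl at 3; simpl. rewrite mul1r. reflexivity. }
  split.
  - split; [unfold cw; rewrite length_map, length_seq; reflexivity|].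
    split; [rewrite cw_nth by lia; reflexivity|].
    split; [rewrite cw_nth by lia; unfold n; rewrite firstn_all; exact P|].
    split.
    + intros i Hi. rewrite cw_nth by auto. split.
      * apply le_one. apply word_Mon; auto.
      * assert (Hq : inv (prodl (firstn i w)) *g g = prodl (skipn i w)).
        { rewrite <- P. rewrite <- (firstn_skipn i w) at 2. rewrite prodl_app. apply mulKl. }
        apply le_intro. apply word_Mon; auto. rewrite Hq. apply word_Mon; auto.
        rewrite Hq, Ef, Es by auto. rewrite (ell_ellf G X _ _ E). fold n. lia.
    + intros i Hi. rewrite !cw_nth by lia. rewrite Snoc by auto. split.
      * apply le_intro. apply word_Mon; auto. rewrite mulKl.
        apply (ell_Mon G X _ 1). apply reduced_nth; auto.
        rewrite mulKl. rewrite <- Snoc by auto. rewrite !Ef by lia.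
        rewrite (ell_ellf G X _ _ (reduced_nth w i R Hi)). lia.
      * intro Eq. assert (ellf (prodl (firstn i w)) = ellf (prodl (firstn (S i) w))) as Z.
        { rewrite Snoc by auto. rewrite <- Eq. reflexivity. }
        rewrite !Ef in Z by lia. lia.
  - apply nth_ext with (d := one) (d' := one). rewrite wc_len. reflexivity.
    intros i Hi. rewrite wc_len in Hi. rewrite wc_nth by auto. rewrite !cw_nth by lia.
    rewrite Snoc by auto. apply mulKl.
Qed.

Lemma SS_app {A} (Rl : A -> A -> Prop) l1 l2 : StronglySorted Rl l1 -> StronglySorted Rl l2 ->
  (forall x y, In x l1 -> In y l2 -> Rl x y) -> StronglySorted Rl (l1 ++ l2).
Proof.
  induction 1 as [|a l1 H1 IH H2]; intros S2 Hc; simpl; auto.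
  constructor. apply IH; auto. intros; apply Hc; simpl; auto.
  apply Forall_app; split; auto. apply Forall_forall. intros y Hy. apply Hc; simpl; auto.
Qed.

Lemma SS_all {A} (Rl : A -> A -> Prop) l : (forall x y, In x l -> In y l -> Rl x y) -> StronglySorted Rl l.
Proof.
  induction l as [|a l IH]; intros H; constructor.
  apply IH; intros; apply H; simpl; auto.
  apply Forall_forall; intros; apply H; simpl; auto.
Qed.

Lemma SS_filter {A} (Rl : A -> A -> Prop) f l : StronglySorted Rl l -> StronglySorted Rl (filter f l).
Proof.
  induction 1 as [|a l H1 IH H2]; simpl; [constructor|].
  destruct (f a); auto. constructor; auto. apply Forall_forall. intros x Hx.
  apply filter_In in Hx as [Hx _]. rewrite Forall_forall in H2. auto.
Qed.

Lemma SS_map {A B} (Rl : B -> B -> Prop) (f : A -> B) l :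
  StronglySorted Rl (map f l) -> StronglySorted (fun a b => Rl (f a) (f b)) l.
Proof.
  induction l as [|a l IH]; simpl; intro H; [constructor|].
  apply StronglySorted_inv in H as [H3 H4]. constructor; auto.
  apply Forall_forall. intros x Hx. rewrite Forall_forall in H4. apply H4. apply in_map; auto.
Qed.

Lemma SS_nth {A} (Rl : A -> A -> Prop) l d i j : StronglySorted Rl l -> (i < j < length l)%nat ->
  Rl (nth i l d) (nth j l d).
Proof.
  intros H; revert i j; induction H as [|a l H1 IH H2]; intros i j Hij; simpl in Hij; [lia|].
  destruct i, j; try lia; simpl.
  - rewrite Forall_forall in H2. apply H2. apply nth_In. lia.
  - apply IH. lia.
Qed.

Lemma filter_true {A} (f : A -> bool) l : (forall x, In x l -> f x = true) -> filter f l = l.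
Proof. induction l as [|a l IH]; intros H; simpl; auto. rewrite H by (simpl; auto). f_equal. apply IH. intros; apply H; simpl; auto. Qed.
Lemma filter_false {A} (f : A -> bool) l : (forall x, In x l -> f x = false) -> filter f l = [].
Proof. induction l as [|a l IH]; intros H; simpl; auto. rewrite H by (simpl; auto). apply IH. intros; apply H; simpl; auto. Qed.
Lemma filter_sub {A} (f h : A -> bool) l : (forall x, f x = true -> h x = true) -> filter f (filter h l) = filter f l.
Proof.
  induction l as [|a l IH]; intros H; simpl; auto.
  destruct (h a) eqn:E; simpl.
  - destruct (f a); [f_equal|]; auto.
  - destruct (f a) eqn:F; auto. rewrite H in E; auto; discriminate.
Qed.

Lemma sum_le_pw {A} (l : list A) (f h : A -> nat) : (forall x, In x l -> (f x <= h x)%nat) ->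
  (list_sum (map f l) <= list_sum (map h l))%nat.
Proof. induction l as [|a l IH]; intros H; simpl; auto. pose proof (H a (or_introl eq_refl)).
  assert (list_sum (map f l) <= list_sum (map h l))%nat by (apply IH; intros; apply H; simpl; auto). lia. Qed.

Lemma sum_eq_pw {A} (l : list A) (f h : A -> nat) : (forall x, In x l -> (f x <= h x)%nat) ->
  (list_sum (map h l) <= list_sum (map f l))%nat -> forall x, In x l -> f x = h x.
Proof.
  induction l as [|a l IH]; intros H E x Hx; simpl in *; [contradiction|].
  pose proof (H a (or_introl eq_refl)).
  assert (list_sum (map f l) <= list_sum (map h l))%nat by (apply sum_le_pw; intros; apply H; auto).
  destruct Hx as [<-|Hx]; [lia|]. apply IH; auto; lia.
Qed.

Lemma sorted_insert (s : list R) x : StronglySorted Rlt s ->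
  exists s', StronglySorted Rlt s' /\ forall y, In y s' <-> y = x \/ In y s.
Proof.
  induction 1 as [|a s H1 IH H2].
  - exists [x]. split; [repeat constructor|]. intros y; simpl. split.
    + intros [->|[]]; auto.
    + intros [->|[]]; auto.
  - destruct (total_order_T x a) as [[Hlt|Heq]|Hgt].
    + exists (x :: a :: s). split.
      * constructor; [constructor; auto|]. constructor; auto.
        rewrite Forall_forall in H2 |- *. intros z Hz. specialize (H2 z Hz). lra.
      * intros y; simpl. split; [intros [->|H]; auto|intros [->|H]; auto].
    + subst. exists (a :: s). split; [constructor; auto|]. intros y. split; [auto|].
      intros [->|Hy]; simpl; auto.
    + destruct IH as [s' [S1 S2]]. exists (a :: s'). split.
      * constructor; auto. apply Forall_forall. intros z Hz. apply S2 in Hz as [->|Hz]; [lra|].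
        rewrite Forall_forall in H2; auto.
      * intros y; simpl. rewrite S2. tauto.
Qed.

Lemma sorted_set (l : list R) : exists s, StronglySorted Rlt s /\ forall x, In x s <-> In x l.
Proof.
  induction l as [|a l IH].
  - exists []. split; [constructor|]. simpl; tauto.
  - destruct IH as [s [S1 S2]]. destruct (sorted_insert s a S1) as [s' [T1 T2]].
    exists s'. split; auto. intros x. rewrite T2, S2. simpl. intuition.
Qed.

Lemma SS_Rlt_NoDup (s : list R) : StronglySorted Rlt s -> NoDup s.
Proof.
  induction 1 as [|a s H1 IH H2]; constructor; auto. intro Ha.
  rewrite Forall_forall in H2. specialize (H2 a Ha). lra.
Qed.

Lemma SS_unique (s s' : list R) : StronglySorted Rlt s -> StronglySorted Rlt s' ->
  (forall x, In x s <-> In x s') -> s = s'.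
Proof.
  intros H; revert s'; induction H as [|a s H1 IH H2]; intros s' H' E.
  - destruct s' as [|b s']; auto. exfalso. apply (E b). simpl; auto.
  - destruct H' as [|b s' H1' H2'].
    + exfalso. apply (E a). simpl; auto.
    + rewrite Forall_forall in H2, H2'.
      assert (a = b).
      { assert (Ha : In a (b :: s')) by (apply E; simpl; auto).
        assert (Hb : In b (a :: s)) by (apply E; simpl; auto).
        destruct Ha as [Ha|Ha]; [auto|]. destruct Hb as [Hb|Hb]; [auto|].
        specialize (H2 b Hb). specialize (H2' a Ha). lra. }
      subst b. f_equal. apply IH; auto. intros x; split; intro Hx.
      * assert (Hx' : In x (a :: s')) by (apply E; simpl; auto). destruct Hx' as [Hx'|Hx']; auto.
        subst x. specialize (H2 a Hx); lra.
      * assert (Hx' : In x (a :: s)) by (apply E; simpl; auto). destruct Hx' as [Hx'|Hx']; auto.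
        subst x. specialize (H2' a Hx); lra.
Qed.

Lemma SS_Rlt_ext (s : list R) : StronglySorted Rlt s -> Forall (fun r => 0 < r < 1) s ->
  StronglySorted Rlt (0 :: s ++ [1]).
Proof.
  intros H F. rewrite Forall_forall in F. constructor.
  - apply SS_app; auto. repeat constructor. intros x y Hx [<-|[]]. specialize (F x Hx). lra.
  - apply Forall_forall. intros x Hx. apply in_app_or in Hx as [Hx|[<-|[]]]; [|lra].
    specialize (F x Hx). lra.
Qed.

Definition eqr (r : R) (p : G * R) : bool := if Req_EM_T (snd p) r then true else false.
Definition PhiL (P : list (G * R)) (r : R) : G := prodl (map fst (filter (eqr r) P)).
Definition Rpos (p q : G * R) : Prop := snd p <= snd q.
Definition Pw (w : list G) (z : nat -> R) : list (G * R) :=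
  map (fun j => (nth (j - 1) w one, z j)) (seq 1 (length w)).

Lemma Phi_PhiL w z r : Phi G w z r = PhiL (Pw w z) r.
Proof. unfold Phi, PhiL, Pw, eqr. rewrite filter_map_swap, map_map. reflexivity. Qed.

Lemma Pw_fst w z : map fst (Pw w z) = w.
Proof.
  unfold Pw. rewrite map_map. apply nth_ext with (d := one) (d' := one).
  rewrite length_map, length_seq; auto.
  intros i Hi. rewrite length_map, length_seq in Hi. rewrite nth_map_seq by auto.
  simpl. rewrite Nat.sub_0_r. reflexivity.
Qed.

Lemma group_split (P : list (G * R)) v : StronglySorted Rpos P -> (forall p, In p P -> v <= snd p) ->
  filter (eqr v) P ++ filter (fun p => negb (eqr v p)) P = P.
Proof.
  induction 1 as [|p P H1 IH H2]; intros Hv; simpl; auto.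
  destruct (eqr v p) eqn:Ev; simpl.
  - f_equal. apply IH. intros; apply Hv; simpl; auto.
  - unfold eqr in Ev. destruct (Req_EM_T (snd p) v) as [E|E]; [discriminate|].
    assert (v < snd p) by (pose proof (Hv p (or_introl eq_refl)); lra).
    rewrite Forall_forall in H2.
    rewrite filter_false, filter_true; auto.
    + intros q Hq. specialize (H2 q Hq). unfold Rpos, eqr in *. destruct (Req_EM_T (snd q) v); auto; lra.
    + intros q Hq. specialize (H2 q Hq). unfold Rpos, eqr in *. destruct (Req_EM_T (snd q) v); auto; lra.
Qed.

Lemma group_concat (S' : list R) (P : list (G * R)) : StronglySorted Rlt S' -> StronglySorted Rpos P ->
  (forall p, In p P -> In (snd p) S') -> concat (map (fun r => filter (eqr r) P) S') = P.
Proof.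
  intros HS; revert P; induction HS as [|v S'' H1 IH H2]; intros P HP Hin; simpl.
  - destruct P as [|p P]; auto. exfalso. apply (Hin p). simpl; auto.
  - rewrite Forall_forall in H2.
    assert (Hge : forall p, In p P -> v <= snd p).
    { intros p Hp. destruct (Hin p Hp) as [E|E]; [lra|]. specialize (H2 _ E). lra. }
    transitivity (filter (eqr v) P ++ filter (fun p => negb (eqr v p)) P);
      [|apply group_split; auto]. f_equal.
    rewrite <- (IH (filter (fun p => negb (eqr v p)) P)).
    + f_equal. apply map_ext_in. intros r Hr. symmetry. apply filter_sub.
      intros p Hp. unfold eqr in *. specialize (H2 r Hr).
      destruct (Req_EM_T (snd p) r); [|discriminate]. destruct (Req_EM_T (snd p) v); auto; lra.
    + apply SS_filter; auto.
    + intros p Hp. apply filter_In in Hp as [Hp Hn]. destruct (Hin p Hp) as [E|E]; auto.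
      unfold eqr in Hn. destruct (Req_EM_T (snd p) v); [discriminate|congruence].
Qed.

Lemma Forall2_ellf L : Forall Mon L -> Forall2 ell L (map ellf L).
Proof. induction 1; simpl; constructor; auto. apply ellf_spec; auto. Qed.

Lemma Forall2_ell_eq L ns : Forall2 ell L ns -> ns = map ellf L.
Proof. induction 1; simpl; auto. f_equal; auto. symmetry. apply ell_ellf; auto. Qed.

Lemma PhiL_word P r : word (map fst P) -> word (map fst (filter (eqr r) P)).
Proof.
  unfold Defs.word. rewrite !Forall_forall. intros H x Hx. apply in_map_iff in Hx as [p [<- Hp]].
  apply filter_In in Hp as [Hp _]. apply H. apply in_map; auto.
Qed.

Lemma PhiL_Mon P r : word (map fst P) -> Mon (PhiL P r).
Proof. intro H. apply word_Mon. apply PhiL_word; auto. Qed.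

Lemma PhiL_none P r : (forall p, In p P -> snd p <> r) -> PhiL P r = one.
Proof.
  intro H. unfold PhiL. rewrite filter_false; auto. intros p Hp. unfold eqr.
  destruct (Req_EM_T (snd p) r); auto. exfalso; eapply H; eauto.
Qed.

Lemma PhiL_concat (Ls : list (list (G * R))) r : PhiL (concat Ls) r = prodl (map (fun l => PhiL l r) Ls).
Proof.
  unfold PhiL. rewrite <- concat_filter_map, concat_map, prodl_concat, !map_map. reflexivity.
Qed.

Definition interior (x : R) : bool := if Rlt_dec 0 x then if Rlt_dec x 1 then true else false else false.

Lemma WF P : reduced g (map fst P) -> StronglySorted Rpos P -> Forall (fun p => 0 <= snd p <= 1) P ->
  wfact G X g (PhiL P).
Proof.
  intros Red SSP F01. pose proof Red as [W [Pg Eg]]. rewrite length_map in Eg.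
  set (n := length P) in *. rewrite Forall_forall in F01.
  destruct (sorted_set (filter interior (map snd P))) as [s [Ss Es]].
  assert (Es' : forall x, In x s <-> In x (map snd P) /\ 0 < x < 1).
  { intros x. rewrite Es, filter_In. unfold interior.
    destruct (Rlt_dec 0 x); destruct (Rlt_dec x 1); split; intros [A B]; split; auto; try lra; discriminate. }
  assert (Fs : Forall (fun r => 0 < r < 1) s).
  { apply Forall_forall. intros x Hx. apply Es' in Hx. tauto. }
  set (S' := 0 :: s ++ [1]).
  assert (SS' : StronglySorted Rlt S') by (apply SS_Rlt_ext; auto).
  assert (Hin : forall p, In p P -> In (snd p) S').
  { intros p Hp. specialize (F01 p Hp). unfold S'.
    destruct (Req_EM_T (snd p) 0) as [E0|E0]; [left; auto|]. right.
    destruct (Req_EM_T (snd p) 1) as [E1|E1]; [apply in_or_app; right; left; auto|].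
    apply in_or_app; left. apply Es'. split; [apply in_map; auto|lra]. }
  assert (GC := group_concat S' P SS' SSP Hin).
  assert (Prod : prodl (map (PhiL P) S') = g).
  { rewrite <- Pg. rewrite <- GC at 2. rewrite concat_map, prodl_concat, !map_map. reflexivity. }
  assert (Count : n = list_sum (map (fun r => length (filter (eqr r) P)) S')).
  { unfold n. rewrite <- GC at 1. rewrite length_concat, map_map. reflexivity. }
  assert (Bound : forall r, (ellf (PhiL P r) <= length (filter (eqr r) P))%nat).
  { intro r. unfold PhiL. rewrite <- (length_map fst). apply ellf_word. apply PhiL_word; auto. }
  assert (FM : Forall Mon (map (PhiL P) S')).
  { apply Forall_forall. intros x Hx. apply in_map_iff in Hx as [r [<- _]]. apply PhiL_Mon; auto. }
  assert (Lower : (n <= list_sum (map ellf (map (PhiL P) S')))%nat).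
  { apply subadd; auto. rewrite Prod. auto. }
  rewrite map_map in Lower.
  assert (EqS : forall r, In r S' -> ellf (PhiL P r) = length (filter (eqr r) P)).
  { apply sum_eq_pw. intros; apply Bound. rewrite <- Count. exact Lower. }
  assert (Nontriv : forall r, In r (map snd P) -> PhiL P r <> one).
  { intros r Hr E. apply in_map_iff in Hr as [p [<- Hp]].
    pose proof (EqS (snd p) (Hin p Hp)) as Z. rewrite E, ellf_one in Z.
    assert (In p (filter (eqr (snd p)) P)).
    { apply filter_In. split; auto. unfold eqr. destruct (Req_EM_T (snd p) (snd p)); auto. }
    destruct (filter (eqr (snd p)) P); [contradiction|discriminate]. }
  split.
  - intros r Hr. apply PhiL_none. intros p Hp E. apply Hr. rewrite <- E. auto.
  - exists s. split; [apply StronglySorted_Sorted; auto|]. split; [auto|]. split.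
    + intros r Hr. split.
      * intros Hne. apply Es'. split; auto. destruct (in_dec Req_EM_T r (map snd P)); auto.
        exfalso. apply Hne. apply PhiL_none. intros p Hp E. apply n0. rewrite <- E. apply in_map; auto.
      * intros Hs. apply Nontriv. apply Es' in Hs. tauto.
    + assert (EL : PhiL P 0 :: map (PhiL P) s ++ [PhiL P 1] = map (PhiL P) S').
      { unfold S'. simpl. rewrite map_app. reflexivity. }
      unfold linfact. rewrite EL. split; [auto|]. split.
      * apply Forall_map. apply Forall_forall. intros r Hr. apply Nontriv. apply Es' in Hr. tauto.
      * split; [|auto]. exists (map ellf (map (PhiL P) S')). split; [apply Forall2_ellf; auto|].
        replace (list_sum (map ellf (map (PhiL P) S'))) with n; auto.
        rewrite map_map. apply Nat.le_antisymm; auto. rewrite Count. apply sum_le_pw. intros; apply Bound.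
Qed.

Definition wd (x : G) : list G := epsilon (inhabits []) (fun w => word w /\ prodl w = x /\ length w = ellf x).

Lemma wd_spec x : Mon x -> word (wd x) /\ prodl (wd x) = x /\ length (wd x) = ellf x.
Proof. intro H. unfold wd. apply epsilon_spec. apply ell_wit. apply ellf_spec; auto. Qed.

Definition block (W : R -> list G) (r : R) : list (G * R) := map (fun a => (a, r)) (W r).

Lemma SS_blocks (W : R -> list G) S' : StronglySorted Rlt S' -> StronglySorted Rpos (concat (map (block W) S')).
Proof.
  induction 1 as [|v S'' H1 IH H2]; simpl; [constructor|].
  apply SS_app; auto.
  - apply SS_all. intros x y Hx Hy. unfold block in *. apply in_map_iff in Hx as [a [<- _]].
    apply in_map_iff in Hy as [b [<- _]]. unfold Rpos; simpl; lra.
  - intros x y Hx Hy. unfold block in Hx. apply in_map_iff in Hx as [a [<- _]].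
    apply in_concat in Hy as [l [Hl Hy]]. apply in_map_iff in Hl as [r [<- Hr]].
    unfold block in Hy. apply in_map_iff in Hy as [b [<- _]]. unfold Rpos; simpl.
    rewrite Forall_forall in H2. specialize (H2 r Hr). lra.
Qed.

Lemma PhiL_block W r' r : PhiL (block W r') r = if Req_EM_T r' r then prodl (W r') else one.
Proof.
  unfold PhiL, block. destruct (Req_EM_T r' r) as [E|E].
  - rewrite filter_true. rewrite map_map. simpl. rewrite map_id. reflexivity.
    intros x Hx. apply in_map_iff in Hx as [a [<- _]]. unfold eqr; simpl. destruct (Req_EM_T r' r); auto.
  - rewrite filter_false. reflexivity.
    intros x Hx. apply in_map_iff in Hx as [a [<- _]]. unfold eqr; simpl. destruct (Req_EM_T r' r); auto.
    contradiction.
Qed.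

Lemma prodl_single (f : R -> G) l r : NoDup l ->
  prodl (map (fun r' => if Req_EM_T r' r then f r' else one) l) =
  if in_dec Req_EM_T r l then f r else one.
Proof.
  induction 1 as [|a l Ha ND IH]; [reflexivity|]. cbn [map]. rewrite prodl_cons, IH.
  destruct (Req_EM_T a r) as [E|E].
  - subst a. destruct (in_dec Req_EM_T r l); [contradiction|].
    destruct (in_dec Req_EM_T r (r :: l)) as [_|C]; [apply mul1r|]. exfalso; apply C; simpl; auto.
  - rewrite gmul1. destruct (in_dec Req_EM_T r l) as [I|I]; destruct (in_dec Req_EM_T r (a :: l)) as [I'|I'];
      auto; exfalso.
    + apply I'. simpl; auto.
    + destruct I' as [I'|I']; auto.
Qed.

Lemma cover u : wfact G X g u -> exists P, reduced g (map fst P) /\ StronglySorted Rpos P /\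
  Forall (fun p => 0 <= snd p <= 1) P /\ forall r, 0 < r < 1 -> PhiL P r = u r.
Proof.
  intros [Hout [s [Ss [Fs [Iff [FM [Fne [[ns [F2 Egs]] Pr]]]]]]]].
  set (S' := 0 :: s ++ [1]).
  assert (Ss' : StronglySorted Rlt s) by (apply Sorted_StronglySorted; auto; intros a b c; apply Rlt_trans).
  assert (SS' : StronglySorted Rlt S') by (apply SS_Rlt_ext; auto).
  assert (EL : u 0 :: map u s ++ [u 1] = map u S') by (unfold S'; simpl; rewrite map_app; reflexivity).
  rewrite EL in FM, F2, Pr. apply Forall2_ell_eq in F2. subst ns.
  rewrite Forall_forall in FM.
  assert (MS : forall r, In r S' -> Mon (u r)) by (intros r Hr; apply FM; apply in_map; auto).
  set (W := fun r => wd (u r)).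
  exists (concat (map (block W) S')).
  assert (Efst : map fst (concat (map (block W) S')) = concat (map W S')).
  { rewrite concat_map, map_map. f_equal. apply map_ext. intro r. unfold block. rewrite map_map.
    simpl. apply map_id. }
  split; [|split; [|split]].
  - rewrite Efst. split; [|split].
    + unfold Defs.word. apply Forall_concat. apply Forall_forall. intros l Hl.
      apply in_map_iff in Hl as [r [<- Hr]]. apply (wd_spec (u r)); auto.
    + rewrite prodl_concat, map_map. rewrite <- Pr. f_equal. apply map_ext_in. intros r Hr.
      apply (wd_spec (u r)); auto.
    + rewrite length_concat, map_map. replace (list_sum (map (fun x => length (W x)) S'))
        with (list_sum (map ellf (map u S'))); auto.
      rewrite map_map. f_equal. apply map_ext_in. intros r Hr. symmetry. apply (wd_spec (u r)); auto.
  - apply SS_blocks; auto.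
  - apply Forall_forall. intros p Hp. apply in_concat in Hp as [l [Hl Hp]].
    apply in_map_iff in Hl as [r [<- Hr]]. unfold block in Hp. apply in_map_iff in Hp as [a [<- _]].
    simpl. unfold S' in Hr. destruct Hr as [<-|Hr]; [lra|]. apply in_app_or in Hr as [Hr|[<-|[]]]; [|lra].
    rewrite Forall_forall in Fs. specialize (Fs r Hr). lra.
  - intros r Hr. rewrite PhiL_concat, map_map.
    transitivity (prodl (map (fun r' => if Req_EM_T r' r then u r' else one) S')).
    + f_equal. apply map_ext_in. intros r' Hr'. rewrite PhiL_block.
      destruct (Req_EM_T r' r); auto. apply (wd_spec (u r')); auto.
    + rewrite prodl_single by (apply SS_Rlt_NoDup; auto).
      destruct (in_dec Req_EM_T r S') as [I|I]; auto.
      destruct (classic (u r = one)) as [E|E]; auto. exfalso. apply I. apply Iff in E; auto.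
      unfold S'. right. apply in_or_app. left; auto.
Qed.

Local Notation inF := (@inF G X g).
Local Notation equivF := (@equivF G g).
Local Notation wfact := (@wfact G X).
Local Notation FSpt := (@FSpt G X g).

Lemma equivF_refl p : equivF p p.
Proof. split; auto. Qed.
Lemma equivF_sym p q : equivF p q -> equivF q p.
Proof. intros [A B]. split; auto. intros r Hr; symmetry; auto. Qed.
Lemma equivF_trans p q t : equivF p q -> equivF q t -> equivF p t.
Proof. intros [A B] [C D]. split; [intros r Hr; rewrite A; auto|congruence]. Qed.

Lemma prodl_snoc l x : prodl (l ++ [x]) = prodl l *g x.
Proof. rewrite prodl_app. unfold Defs.prodl at 2; simpl. rewrite mul1r. reflexivity. Qed.

Lemma wfact_mid h u : wfact h u -> exists s, StronglySorted Rlt s /\ Forall (fun r => 0 < r < 1) s /\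
  (forall r, 0 < r < 1 -> (u r <> one <-> In r s)) /\ u 0 *g (prodl (map u s) *g u 1) = h.
Proof.
  intros [Hout [s [Ss [Fs [Iff [FM [Fne [_ Pr]]]]]]]]. exists s.
  split; [apply Sorted_StronglySorted; auto; intros a b c; apply Rlt_trans|].
  split; auto. split; auto. rewrite prodl_cons, prodl_snoc in Pr. exact Pr.
Qed.

Lemma wfact_Mon h u : wfact h u -> forall r, Mon (u r).
Proof.
  intros [Hout [s [Ss [Fs [Iff [FM _]]]]]] r. rewrite Forall_forall in FM.
  destruct (classic (0 <= r <= 1)) as [H|H]; [|rewrite Hout; auto; apply Mon_one].
  destruct (Req_EM_T r 0) as [->|E0]; [apply FM; left; auto|].
  destruct (Req_EM_T r 1) as [->|E1]; [apply FM; right; apply in_or_app; right; left; auto|].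
  destruct (classic (u r = one)) as [E|E]; [rewrite E; apply Mon_one|].
  apply FM. right. apply in_or_app. left. apply in_map. apply Iff; auto. lra.
Qed.

Lemma supp_eq (u v : R -> G) s t : StronglySorted Rlt s -> Forall (fun r => 0 < r < 1) s ->
  (forall r, 0 < r < 1 -> (u r <> one <-> In r s)) ->
  StronglySorted Rlt t -> Forall (fun r => 0 < r < 1) t ->
  (forall r, 0 < r < 1 -> (v r <> one <-> In r t)) ->
  (forall r, 0 < r < 1 -> u r = v r) -> s = t.
Proof.
  intros S1 F1 I1 S2 F2 I2 E. apply SS_unique; auto. rewrite Forall_forall in F1, F2.
  intros x; split; intro Hx.
  - pose proof (F1 x Hx). apply I2; auto. rewrite <- E by auto. apply I1; auto.
  - pose proof (F2 x Hx). apply I1; auto. rewrite E by auto. apply I2; auto.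
Qed.

Lemma cexp_g u0 m u1 : u0 *g (m *g u1) = g -> g *g u1 *g inv g *g u0 = g *g inv m.
Proof.
  intro H. assert (E : u1 = inv m *g (inv u0 *g g)) by (rewrite <- H, !mulKl; reflexivity).
  rewrite E, <- !gmulA. rewrite (mulKr G g u0). rewrite gmulV, mul1r. reflexivity.
Qed.

Lemma interior_equiv p q : inF p -> inF q -> fst p = g -> fst q = g ->
  (forall r, 0 < r < 1 -> snd p r = snd q r) -> equivF p q.
Proof.
  intros [_ [_ Wp]] [_ [_ Wq]] Ep Eq E. rewrite Ep in Wp. rewrite Eq in Wq.
  destruct (wfact_mid _ _ Wp) as [s [S1 [F1 [I1 P1]]]].
  destruct (wfact_mid _ _ Wq) as [t [S2 [F2 [I2 P2]]]].
  assert (s = t) by (eapply supp_eq; eauto). subst t.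
  split; auto. unfold equivF.
  rewrite (cexp_g _ _ _ P1), (cexp_g _ _ _ P2). f_equal. f_equal.
  f_equal. apply map_ext_in. intros r Hr. apply E. rewrite Forall_forall in F1. auto.
Qed.

Lemma FSTG p q : inF p -> inF q -> fst p = g -> equivF p q -> fst q = g.
Proof.
  intros [_ [_ Wp]] [_ [_ Wq]] Ep [E C]. rewrite Ep in Wp.
  destruct (wfact_mid _ _ Wp) as [s [S1 [F1 [I1 P1]]]].
  destruct (wfact_mid _ _ Wq) as [t [S2 [F2 [I2 P2]]]].
  assert (s = t) by (eapply supp_eq; eauto). subst t.
  set (m := prodl (map (snd p) s)) in *.
  assert (Em : prodl (map (snd q) s) = m).
  { unfold m. f_equal. apply map_ext_in. intros r Hr. symmetry. apply E. rewrite Forall_forall in F1. auto. }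
  rewrite Em in P2. rewrite (cexp_g _ _ _ P1) in C.
  set (h := fst q) in *. set (v0 := snd q 0) in *. set (v1 := snd q 1) in *.
  (* C : g * inv m = g * v1 * inv g * v0 ; P2 : v0 * (m * v1) = h *)
  rewrite <- !gmulA in C. apply mul_cancel_l in C.
  assert (Ev1 : v1 = inv m *g (inv v0 *g h)) by (rewrite <- P2, !mulKl; reflexivity).
  rewrite Ev1, <- !gmulA in C.
  rewrite <- (mul1r G (inv m)) in C at 1. apply mul_cancel_l in C.
  (* C : one = inv v0 * (h * (inv g * v0)) *)
  assert (C2 : v0 = h *g (inv g *g v0)).
  { rewrite <- (mul1r G v0) at 1. rewrite C. apply mulKr. }
  rewrite gmulA in C2. rewrite <- (gmul1 G v0) in C2 at 1. apply mul_cancel_r in C2.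
  (* C2 : one = h * inv g *)
  symmetry. apply (mul_cancel_r G (inv g)). rewrite mulV. first [exact C2 | symmetry; exact C2].
Qed.

Definition mkclass (p : G * (R -> G)) (H : inF p) : FSpt :=
  exist _ (fun q => inF q /\ equivF p q) (ex_intro _ p (conj H eq_refl)).

Lemma mkclass_mem p H : proj1_sig (mkclass p H) p.
Proof. split; auto. apply equivF_refl. Qed.

Lemma class_mem_equiv (A : FSpt) p q : proj1_sig A p -> proj1_sig A q -> equivF p q.
Proof.
  destruct A as [PA [p0 [H0 ->]]]. simpl. intros [_ E1] [_ E2].
  eapply equivF_trans; [apply equivF_sym; exact E1|exact E2].
Qed.

Lemma class_mem_inF (A : FSpt) p : proj1_sig A p -> inF p.
Proof. destruct A as [PA [p0 [H0 ->]]]. simpl. tauto. Qed.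

Lemma class_add (A : FSpt) p q : proj1_sig A p -> inF q -> equivF p q -> proj1_sig A q.
Proof.
  destruct A as [PA [p0 [H0 ->]]]. simpl. intros [_ E1] I E2. split; auto.
  eapply equivF_trans; eauto.
Qed.

Lemma class_eq (A B : FSpt) q : proj1_sig A q -> proj1_sig B q -> A = B.
Proof.
  intros HA HB.
  assert (E : proj1_sig A = proj1_sig B).
  { destruct A as [PA [pa [Ha ->]]]. destruct B as [PB [pb [Hb ->]]]. simpl in *.
    destruct HA as [_ EA]. destruct HB as [_ EB].
    apply functional_extensionality. intro x. apply propositional_extensionality.
    split; intros [I E]; split; auto.
    - eapply equivF_trans; [exact EB|]. eapply equivF_trans; [apply equivF_sym; exact EA|exact E].
    - eapply equivF_trans; [exact EA|]. eapply equivF_trans; [apply equivF_sym; exact EB|exact E]. }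
  destruct A as [PA HA']. destruct B as [PB HB']. simpl in E. subst PB. f_equal. apply proof_irrelevance.
Qed.

Lemma sum_zero_all {A} (l : list A) (f : A -> nat) : list_sum (map f l) = 0%nat -> forall x, In x l -> f x = 0%nat.
Proof. induction l as [|a l IH]; simpl; intros H x Hx; [contradiction|]. destruct Hx as [<-|Hx]; [lia|]. apply IH; auto; lia. Qed.

Lemma sum_all_zero {A} (l : list A) (f : A -> nat) : (forall x, In x l -> f x = 0%nat) -> list_sum (map f l) = 0%nat.
Proof. induction l as [|a l IH]; simpl; intros H; auto. rewrite H by auto. rewrite IH; auto. Qed.

Lemma sum_map_add {A} (l : list A) (f h : A -> nat) :
  list_sum (map (fun x => f x + h x)%nat l) = (list_sum (map f l) + list_sum (map h l))%nat.
Proof. induction l as [|a l IH]; simpl; auto. rewrite IH. lia. Qed.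

Lemma sum_superset (l1 l2 : list R) (f : R -> nat) : NoDup l1 -> NoDup l2 -> incl l1 l2 ->
  (forall x, In x l2 -> ~ In x l1 -> f x = 0%nat) -> list_sum (map f l2) = list_sum (map f l1).
Proof.
  intros N1 N2 Inc Z.
  set (ex := filter (fun x => if in_dec Req_EM_T x l1 then false else true) l2).
  assert (Pm : Permutation l2 (l1 ++ ex)).
  { apply NoDup_Permutation; auto.
    - apply NoDup_app; auto. apply NoDup_filter; auto.
      intros a Ha Hb. apply filter_In in Hb as [_ Hb]. destruct (in_dec Req_EM_T a l1); [discriminate|contradiction].
    - intros x; split; intro Hx.
      + apply in_or_app. destruct (in_dec Req_EM_T x l1); [left; auto|right].
        apply filter_In. split; auto. destruct (in_dec Req_EM_T x l1); [contradiction|auto].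
      + apply in_app_or in Hx as [Hx|Hx]; auto. apply filter_In in Hx; tauto. }
  rewrite (Permutation_list_sum (Permutation_map f Pm)). rewrite map_app, list_sum_app.
  rewrite (sum_all_zero ex); [lia|]. intros x Hx. apply filter_In in Hx as [Hx1 Hx2].
  apply Z; auto. destruct (in_dec Req_EM_T x l1); [discriminate|auto].
Qed.

Lemma sum_snoc l x : list_sum (map ellf (l ++ [x])) = (list_sum (map ellf l) + ellf x)%nat.
Proof. rewrite map_app, list_sum_app. simpl. lia. Qed.

Lemma MAXG (A : FSpt) p : maximalFS A -> proj1_sig A p -> fst p = g.
Proof.
  intros Hmax Hp. pose proof (class_mem_inF A p Hp) as Ip. pose proof Ip as [L1 [L2 W]].
  destruct (classic (fst p = g)) as [E|Hne]; auto. exfalso.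
  set (h := fst p) in *. set (u := snd p) in *.
  destruct (le_inv G X _ _ L2) as [Mh' Eh']. set (h' := inv h *g g) in *.
  pose proof W as [Hout [s [Ss [Fs [Iff [FM [Fne [[ns [F2 Eh]] Pr]]]]]]]].
  apply Forall2_ell_eq in F2. subst ns.
  set (Apre := u 0 :: map u s).
  change (u 0 :: map u s ++ [u 1]) with (Apre ++ [u 1]) in FM, Pr, Eh.
  rewrite sum_snoc in Eh. rewrite prodl_snoc in Pr.
  apply Forall_app in FM as [FMpre FM1]. apply Forall_inv in FM1 as Mu1.
  set (v := fun r => if Req_EM_T r 1 then u 1 *g h' else u r).
  assert (Lv : v 0 :: map v s ++ [v 1] = Apre ++ [u 1 *g h']).
  { unfold v, Apre. destruct (Req_EM_T 0 1); [lra|]. destruct (Req_EM_T 1 1); [|congruence].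
    simpl. f_equal. f_equal. apply map_ext_in. intros r Hr. rewrite Forall_forall in Fs.
    specialize (Fs r Hr). destruct (Req_EM_T r 1); auto; lra. }
  assert (Pv : prodl (Apre ++ [u 1 *g h']) = g).
  { rewrite prodl_snoc, gmulA, Pr. unfold h'. apply mulKr. }
  assert (Mh : Mon h) by (eapply le_Mon_r; eauto).
  assert (Mg : Mon g) by (eapply le_Mon_r; eauto).
  assert (Eh2 : ellf h = (list_sum (map ellf Apre) + ellf (u 1%R))%nat) by (apply ell_ellf; auto).
  assert (FMv : Forall Mon (Apre ++ [u 1 *g h'])).
  { apply Forall_app; split; auto. constructor; auto. apply Mon_mul; auto. }
  assert (Sub : Nat.le (ellf g) (list_sum (map ellf (Apre ++ [u 1 *g h'])))).
  { apply subadd; auto. rewrite Pv. apply ellf_spec; auto. }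
  rewrite sum_snoc in Sub.
  pose proof (ellf_mul_le G X (u 1) h' Mu1 Mh') as Le1.
  assert (Key : ellf (u 1%R *g h') = (ellf (u 1%R) + ellf h')%nat) by lia.
  assert (Wv : wfact g v).
  { split.
    - intros r Hr. unfold v. destruct (Req_EM_T r 1); [exfalso; apply Hr; lra|]. auto.
    - exists s. split; auto. split; auto. split.
      + intros r Hr. unfold v. destruct (Req_EM_T r 1); [lra|]. auto.
      + unfold linfact. rewrite Lv. split; [auto|]. split.
        * replace (map v s) with (map u s); auto. apply map_ext_in. intros r Hr.
          rewrite Forall_forall in Fs. specialize (Fs r Hr). unfold v. destruct (Req_EM_T r 1); auto; lra.
        * split; auto. exists (map ellf (Apre ++ [u 1 *g h'])). split; [apply Forall2_ellf; auto|].
          replace (list_sum (map ellf (Apre ++ [u 1 *g h']))) with (ellf g).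
          apply ellf_spec; auto. rewrite sum_snoc. lia. }
  set (q := (g, v)).
  assert (Iq : inF q) by (split; [apply le_one; auto|split; [apply le_refl; auto|exact Wv]]).
  assert (Hle : leFS A (mkclass q Iq)).
  { exists p, q. split; auto. split; [apply mkclass_mem|]. intros r Hr. simpl. unfold v.
    destruct (Req_EM_T r 1) as [->|Hr1].
    - fold u. apply le_intro; auto. rewrite mulKl; auto. rewrite mulKl. lia.
    - apply le_refl. eapply wfact_Mon; eauto. }
  specialize (Hmax _ Hle). pose proof (mkclass_mem q Iq) as Mq. rewrite Hmax in Mq.
  destruct (class_mem_equiv A p q Hp Mq) as [_ C]. simpl in C.
  unfold v in C. destruct (Req_EM_T 1 1); [|congruence]. destruct (Req_EM_T 0 1); [lra|].
  fold u in C. apply mul_cancel_r, mul_cancel_r in C.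
  apply mul_cancel_l in C. rewrite <- (mul1r G (u 1)) in C at 1. apply mul_cancel_l in C.
  apply Hne. fold h. apply div_eq1. unfold h' in C. auto.
Qed.

Lemma K6 (A : FSpt) p : proj1_sig A p -> fst p = g -> maximalFS A.
Proof.
  intros Hp Ep B [p' [q [Hp' [Hq Hsub]]]].
  pose proof (class_mem_inF A p Hp) as Ip. pose proof (class_mem_inF A p' Hp') as Ip'.
  pose proof (class_mem_inF B q Hq) as Iq.
  assert (Ep' : fst p' = g) by (apply (FSTG p p' Ip Ip' Ep (class_mem_equiv A p p' Hp Hp'))).
  pose proof Ip' as [_ [_ Wp']]. rewrite Ep' in Wp'. pose proof Iq as [_ [Lqg Wq]].
  set (u := snd p') in *. set (v := snd q) in *. set (hq := fst q) in *.
  pose proof Wp' as [Hout [s [Ss [Fs [Iff [FM [_ [[ns [F2 Eg]] _]]]]]]]].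
  pose proof Wq as [Hout' [t [St [Ft [Iff' [FM' [_ [[nt [F2' Eq]] _]]]]]]]].
  apply Forall2_ell_eq in F2, F2'. subst ns nt.
  set (S' := 0 :: s ++ [1]). set (T' := 0 :: t ++ [1]).
  assert (ELu : u 0 :: map u s ++ [u 1] = map u S') by (unfold S'; simpl; rewrite map_app; reflexivity).
  assert (ELv : v 0 :: map v t ++ [v 1] = map v T') by (unfold T'; simpl; rewrite map_app; reflexivity).
  rewrite ELu in Eg. rewrite ELv in Eq. rewrite map_map in Eg, Eq.
  apply ell_ellf in Eg. apply ell_ellf in Eq.
  destruct (le_inv G X _ _ Lqg) as [_ Eqg].
  assert (Ss' : StronglySorted Rlt s) by (apply Sorted_StronglySorted; auto; intros a b c; apply Rlt_trans).
  assert (St' : StronglySorted Rlt t) by (apply Sorted_StronglySorted; auto; intros a b c; apply Rlt_trans).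
  assert (NS : NoDup S') by (apply SS_Rlt_NoDup, SS_Rlt_ext; auto).
  assert (NT : NoDup T') by (apply SS_Rlt_NoDup, SS_Rlt_ext; auto).
  rewrite Forall_forall in Fs, Ft.
  assert (Dec : forall r, 0 <= r <= 1 -> Mon (inv (u r) *g v r) /\
                  ellf (v r) = (ellf (u r) + ellf (inv (u r) *g v r))%nat).
  { intros r Hr. apply le_inv. apply Hsub; auto. }
  assert (Mu : forall r, Mon (u r)) by (apply wfact_Mon with (h := g); auto).
  assert (Sst : forall r, In r s -> In r t).
  { intros r Hr. pose proof (Fs r Hr). apply Iff' ; auto. intro E.
    assert (ellf (u r) = 0%nat).
    { pose proof (Dec r ltac:(lra)) as [_ D]. rewrite E, ellf_one in D. lia. }
    apply ellf_zero in H0; auto. revert H0. apply Iff; auto. }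
  assert (Inc : incl S' T').
  { intros r Hr. unfold S', T' in *. destruct Hr as [<-|Hr]; [left; auto|right].
    apply in_app_or in Hr as [Hr|Hr]; apply in_or_app; [left; auto|right; auto]. }
  assert (Sup : list_sum (map (fun r => ellf (u r)) T') = list_sum (map (fun r => ellf (u r)) S')).
  { apply sum_superset; auto. intros x Hx Hnx. unfold T' in Hx.
    destruct Hx as [<-|Hx]; [exfalso; apply Hnx; left; auto|].
    apply in_app_or in Hx as [Hx|[<-|[]]]; [|exfalso; apply Hnx; right; apply in_or_app; right; left; auto].
    pose proof (Ft x Hx). destruct (classic (u x = one)) as [E|E]; [rewrite E; apply ellf_one|].
    exfalso. apply Hnx. right. apply in_or_app. left. apply Iff; auto. }
  assert (InT01 : forall r, In r T' -> 0 <= r <= 1).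
  { intros r Hr. unfold T' in Hr. destruct Hr as [<-|Hr]; [lra|].
    apply in_app_or in Hr as [Hr|[<-|[]]]; [|lra]. pose proof (Ft r Hr); lra. }
  assert (SumV : list_sum (map (fun r => ellf (v r)) T') =
     (list_sum (map (fun r => ellf (u r)) T') + list_sum (map (fun r => ellf (inv (u r) *g v r)) T'))%nat).
  { rewrite <- sum_map_add. f_equal. apply map_ext_in. intros r Hr. apply Dec. auto. }
  assert (Z := sum_zero_all T' (fun r => ellf (inv (u r) *g v r)) ltac:(lia)).
  assert (EqT : forall r, In r T' -> v r = u r).
  { intros r Hr. symmetry. apply div_eq1. apply (ellf_zero G X); auto. apply Dec; auto. }
  assert (EqA : forall r, 0 <= r <= 1 -> v r = u r).
  { intros r Hr. destruct (in_dec Req_EM_T r T') as [I|I]; auto.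
    assert (0 < r < 1).
    { assert (r <> 0) by (intro E; apply I; left; auto).
      assert (r <> 1) by (intro E; apply I; right; apply in_or_app; right; left; auto). lra. }
    assert (Hv : v r = one).
    { destruct (classic (v r = one)) as [E|E]; auto. exfalso. apply I. right. apply in_or_app. left. apply Iff'; auto. }
    assert (Hu : u r = one).
    { destruct (classic (u r = one)) as [E|E]; auto. exfalso. apply I. right. apply in_or_app. left.
      apply Sst. apply Iff; auto. }
    congruence. }
  assert (Eqv : equivF p' q).
  { split.
    - intros r Hr. symmetry. apply EqA. lra.
    - fold u v. rewrite (EqA 0), (EqA 1) by lra. reflexivity. }
  assert (HqA : proj1_sig A q) by (eapply class_add; eauto).
  apply (class_eq B A q); auto.
Qed.

Lemma Sorted_map_seq {A} (Rl : A -> A -> Prop) (f : nat -> A) k m :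
  (forall i, (k <= i)%nat -> (S i < k + m)%nat -> Rl (f i) (f (S i))) -> Sorted Rl (map f (seq k m)).
Proof.
  revert k; induction m as [|m IH]; intros k H; simpl; [constructor|].
  constructor. apply IH. intros i Hi Hi'. apply H; lia.
  destruct m; simpl; constructor. apply H; lia.
Qed.

Lemma Rpos_trans : Relations_1.Transitive Rpos.
Proof. intros a b c; unfold Rpos; lra. Qed.

Lemma Pw_SS w z : inDelta (length w) z -> StronglySorted Rpos (Pw w z).
Proof.
  intros [H1 H2]. apply Sorted_StronglySorted; [apply Rpos_trans|]. unfold Pw.
  apply Sorted_map_seq. intros i Hi Hi'. unfold Rpos; simpl. apply H2. lia.
Qed.

Lemma Pw_01 w z : inDelta (length w) z -> Forall (fun p => 0 <= snd p <= 1) (Pw w z).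
Proof.
  intros [H1 H2]. apply Forall_forall. intros p Hp. unfold Pw in Hp.
  apply in_map_iff in Hp as [j [<- Hj]]. apply in_seq in Hj. simpl. apply H1. lia.
Qed.

Lemma Phi_fun w z : Phi G w z = PhiL (Pw w z).
Proof. apply functional_extensionality. intro r. apply Phi_PhiL. Qed.

Lemma wfact_Phi w z : reduced g w -> inDelta (length w) z -> wfact g (Phi G w z).
Proof.
  intros Red HD. rewrite Phi_fun. apply WF.
  - rewrite Pw_fst. auto.
  - apply Pw_SS; auto.
  - apply Pw_01; auto.
Qed.

Lemma SS_map_inv {A B} (Rl : B -> B -> Prop) (f : A -> B) l :
  StronglySorted (fun a b => Rl (f a) (f b)) l -> StronglySorted Rl (map f l).
Proof.
  induction 1 as [|a l H1 IH H2]; simpl; constructor; auto.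
  apply Forall_forall. intros y Hy. apply in_map_iff in Hy as [x [<- Hx]].
  rewrite Forall_forall in H2. apply H2; auto.
Qed.

Lemma Pw_of_P P : StronglySorted Rpos P -> Forall (fun p => 0 <= snd p <= 1) P ->
  Pw (map fst P) (fun j => nth (j - 1) (map snd P) 0) = P /\
  inDelta (length (map fst P)) (fun j => nth (j - 1) (map snd P) 0).
Proof.
  intros SS F. rewrite length_map. split.
  - apply nth_ext with (d := (one, 0)) (d' := (one, 0)).
    + unfold Pw. rewrite length_map, length_seq, length_map. auto.
    + intros i Hi. unfold Pw in Hi |- *. rewrite length_map, length_seq, length_map in Hi.
      rewrite nth_map_seq by (rewrite length_map; auto). simpl. rewrite Nat.sub_0_r.
      rewrite (nth_indep _ one (fst (one, 0))) by (rewrite length_map; auto).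
      rewrite (nth_indep _ 0 (snd (one, 0))) by (rewrite length_map; auto).
      rewrite !map_nth. destruct (nth i P (one, 0)); reflexivity.
  - rewrite Forall_forall in F. split.
    + intros j Hj. simpl. destruct j; [lia|]. simpl. rewrite Nat.sub_0_r.
      rewrite (nth_indep _ 0 (snd (one, 0))) by (rewrite length_map; lia).
      rewrite map_nth. apply F. apply nth_In. lia.
    + intros j Hj. simpl. destruct j; [lia|]. simpl. rewrite Nat.sub_0_r.
      pose proof (SS_map_inv Rle snd P SS) as SS2. apply (SS_nth Rle (map snd P) 0 j (S j)); auto.
      rewrite length_map. lia.
Qed.

Lemma revy_inDelta n y : inDelta n y -> inDelta n (revy n y).
Proof.
  intros [H1 H2]. unfold revy. split.
  - intros j Hj. assert (0 <= y (S n - j)%nat <= 1) by (apply H1; lia). lra.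
  - intros j Hj. replace (S n - j)%nat with (S (S n - S j)) by lia.
    assert (y (S n - S j)%nat <= y (S (S n - S j))) by (apply H2; lia). lra.
Qed.

Lemma revy_revy n z j : (1 <= j <= n)%nat -> revy n (revy n z) j = z j.
Proof. intro H. unfold revy. replace (S n - (S n - j))%nat with j by lia. ring. Qed.

Lemma Phi_ext w y y' : (forall j, (1 <= j <= length w)%nat -> y j = y' j) -> Phi G w y = Phi G w y'.
Proof.
  intro H. apply functional_extensionality. intro r. unfold Phi. f_equal. f_equal.
  apply filter_ext_in. intros j Hj. apply in_seq in Hj. rewrite H by lia. reflexivity.
Qed.

Definition cellK n c y := ell g n /\ maxchain n c /\ inDelta n y.
Definition uK n c y := Phi G (wc n c) (revy n y).

Lemma inF_uK n c y : cellK n c y -> inF (g, uK n c y).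
Proof.
  intros [Eg [Mc HD]]. assert (Mg : Mon g) by (eapply ell_Mon; eauto).
  split; [apply le_one; auto|split; [apply le_refl; auto|]]. simpl.
  apply wfact_Phi. apply maxchain_reduced; auto. rewrite wc_len. apply revy_inDelta; auto.
Qed.

Lemma ALPHA n c y n' c' y' : cellK n c y -> cellK n' c' y' ->
  (Dsc G n c y = Dsc G n' c' y' <-> forall r, 0 < r < 1 -> uK n c y r = uK n' c' y' r).
Proof.
  intros [Eg [Mc HD]] [Eg' [Mc' HD']].
  destruct (K2 n c y HD (maxchain_inj n c Eg Mc)) as [P1 [S1 [L1 [N1 D1]]]].
  destruct (K2 n' c' y' HD' (maxchain_inj n' c' Eg' Mc')) as [P2 [S2 [L2 [N2 D2]]]].
  split.
  - intros E r Hr. unfold uK. rewrite <- D1, <- D2 by auto. rewrite E. reflexivity.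
  - intros E. destruct (Dv_uniq G _ _ _ _ 1 P1 P2 S1 S2 L1 L2 N1 N2) as [A B].
    + intros r Hr. rewrite D1, D2 by auto. apply E; auto.
    + rewrite (surjective_pairing (Dsc G n c y)), (surjective_pairing (Dsc G n' c' y')). congruence.
Qed.

Lemma word_cell w z : reduced g w -> inDelta (length w) z ->
  cellK (length w) (cw w) (revy (length w) z) /\ uK (length w) (cw w) (revy (length w) z) = Phi G w z.
Proof.
  intros Red HD. destruct (cw_maxchain w Red) as [Mc Ew]. split.
  - split; [apply Red|]. split; auto. apply revy_inDelta; auto.
  - unfold uK. rewrite Ew. apply Phi_ext. intros j Hj. apply revy_revy; auto.
Qed.

Lemma cover_cell u : wfact g u -> exists n c y, cellK n c y /\ forall r, 0 < r < 1 -> uK n c y r = u r.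
Proof.
  intro W. destruct (cover u W) as [P [Red [SS [F E]]]].
  destruct (Pw_of_P P SS F) as [EP HD].
  set (w := map fst P) in *. set (z := fun j => nth (j - 1) (map snd P) 0) in *.
  destruct (word_cell w z Red HD) as [C U].
  exists (length w), (cw w), (revy (length w) z). split; auto.
  intros r Hr. rewrite U, Phi_PhiL, EP. apply E; auto.
Qed.

Local Notation MaxPt := (@MaxPt G X g).
Local Notation Kpt := (@Kpt G X g).

Lemma sig_eq {A : Type} {P : A -> Prop} (a b : sig P) : proj1_sig a = proj1_sig b -> a = b.
Proof. destruct a as [x Hx], b as [y Hy]; simpl. intros ->. f_equal. apply proof_irrelevance. Qed.

Lemma fcell_ex (a : MaxPt) : exists t : nat * list G * (nat -> R),
  cellK (fst (fst t)) (snd (fst t)) (snd t) /\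
  proj1_sig (proj1_sig a) (g, uK (fst (fst t)) (snd (fst t)) (snd t)).
Proof.
  destruct a as [A Hmax]. simpl. pose proof (proj2_sig A) as [p [Ip EA]].
  assert (Hp : proj1_sig A p) by (rewrite EA; split; auto; apply equivF_refl).
  pose proof (MAXG A p Hmax Hp) as Ep. pose proof Ip as [_ [_ W]]. rewrite Ep in W.
  destruct (cover_cell _ W) as [n [c [y [C E]]]].
  exists (n, c, y). simpl. split; auto.
  apply class_add with p; auto. apply inF_uK; auto.
  apply interior_equiv; auto. apply inF_uK; auto. intros r Hr. simpl. symmetry. apply E; auto.
Qed.

Definition fcell (a : MaxPt) := proj1_sig (constructive_indefinite_description _ (fcell_ex a)).

Lemma fcell_spec a : cellK (fst (fst (fcell a))) (snd (fst (fcell a))) (snd (fcell a)) /\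
  proj1_sig (proj1_sig a) (g, uK (fst (fst (fcell a))) (snd (fst (fcell a))) (snd (fcell a))).
Proof. unfold fcell. destruct (constructive_indefinite_description _ _) as [t Ht]. exact Ht. Qed.

Definition fD (a : MaxPt) := Dsc G (fst (fst (fcell a))) (snd (fst (fcell a))) (snd (fcell a)).

Lemma fK_pf a : exists n c y, ell g n /\ maxchain n c /\ inDelta n y /\ Dsc G n c y = fD a.
Proof.
  destruct (fcell_spec a) as [[E1 [E2 E3]] _].
  exists (fst (fst (fcell a))), (snd (fst (fcell a))), (snd (fcell a)). auto.
Qed.

Definition fK (a : MaxPt) : Kpt := exist _ (fD a) (fK_pf a).

Lemma fD_char a n c y : cellK n c y -> proj1_sig (proj1_sig a) (g, uK n c y) -> fD a = Dsc G n c y.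
Proof.
  intros C Hin. destruct (fcell_spec a) as [C' Hin'].
  unfold fD. apply ALPHA; auto. intros r Hr.
  destruct (class_mem_equiv _ _ _ Hin' Hin) as [E _]. apply E; auto.
Qed.

Lemma member_from_D a n c y : cellK n c y -> fD a = Dsc G n c y ->
  proj1_sig (proj1_sig a) (g, uK n c y).
Proof.
  intros C E. destruct (fcell_spec a) as [C' Hin'].
  apply class_add with (1 := Hin'). apply inF_uK; auto.
  apply interior_equiv; auto. apply inF_uK; auto. apply inF_uK; auto.
  simpl. apply ALPHA; auto.
Qed.

Lemma gcell_ex (d : Kpt) : exists t : nat * list G * (nat -> R),
  cellK (fst (fst t)) (snd (fst t)) (snd t) /\ Dsc G (fst (fst t)) (snd (fst t)) (snd t) = proj1_sig d.
Proof.
  destruct d as [x [n [c [y [E1 [E2 [E3 E4]]]]]]]. exists (n, c, y). simpl.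
  split; auto. split; auto.
Qed.

Definition gcell (d : Kpt) := proj1_sig (constructive_indefinite_description _ (gcell_ex d)).

Lemma gcell_spec d : cellK (fst (fst (gcell d))) (snd (fst (gcell d))) (snd (gcell d)) /\
  Dsc G (fst (fst (gcell d))) (snd (fst (gcell d))) (snd (gcell d)) = proj1_sig d.
Proof. unfold gcell. destruct (constructive_indefinite_description _ _) as [t Ht]. exact Ht. Qed.

Definition gA (d : Kpt) : FSpt :=
  mkclass (g, uK (fst (fst (gcell d))) (snd (fst (gcell d))) (snd (gcell d)))
          (inF_uK _ _ _ (proj1 (gcell_spec d))).

Lemma gA_max d : maximalFS (gA d).
Proof. apply (K6 _ _ (mkclass_mem _ _)). all: reflexivity. Qed.

Definition gK (d : Kpt) : MaxPt := exist _ (gA d) (gA_max d).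

Lemma gK_fK a : gK (fK a) = a.
Proof.
  apply sig_eq. simpl. destruct (gcell_spec (fK a)) as [C E].
  apply (class_eq _ _ _ (mkclass_mem _ _)). apply member_from_D; auto.
Qed.

Lemma fK_gK d : fK (gK d) = d.
Proof.
  apply sig_eq. simpl. destruct (gcell_spec d) as [C E]. rewrite <- E.
  apply fD_char; auto. apply mkclass_mem.
Qed.

Lemma cellopen_rev n (P Q : (nat -> R) -> Prop) : cellopen n Q ->
  (forall y, inDelta n y -> (P y <-> Q (revy n y))) -> cellopen n P.
Proof.
  intros HQ E y Hy Py.
  destruct (HQ (revy n y) (revy_inDelta n y Hy) (proj1 (E y Hy) Py)) as [eps [Heps Hz]].
  exists eps. split; auto. intros z Hz' Hclose. apply (E z Hz'). apply Hz.
  - apply revy_inDelta; auto.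
  - intros j Hj. unfold revy.
    replace (1 - z (S n - j)%nat - (1 - y (S n - j)%nat)) with (- (z (S n - j)%nat - y (S n - j)%nat)) by ring.
    rewrite Rabs_Ropp. apply Hclose. lia.
Qed.

Lemma T1 V : Kopen V -> MaxOpen (fun a => V (fK a)).
Proof.
  intro HV. exists (fun A => exists H : maximalFS A, V (fK (exist _ A H))). split.
  - intros h w L1 L2 Red. destruct (classic (h = g)) as [->|Hne].
    + set (n := length w). destruct (cw_maxchain w Red) as [Mc _].
      assert (Eg : ell g n) by apply Red.
      pose proof (HV n (cw w) Eg Mc) as CQ.
      apply (cellopen_rev n _ _ CQ). intros y Hy.
      destruct (word_cell w y Red Hy) as [C U]. fold n in C, U.
      split.
      * intros [A [[H HV'] Hin]]. exists (fK (exist _ A H)). split; auto. simpl.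
        apply fD_char; auto. simpl. rewrite U. exact Hin.
      * intros [d [Vd Ed]].
        assert (I : inF (g, Phi G w y)) by (rewrite <- U; apply inF_uK; auto).
        exists (mkclass _ I). split; [|apply mkclass_mem].
        exists (K6 _ _ (mkclass_mem _ I) eq_refl).
        replace (fK (exist _ (mkclass (g, Phi G w y) I) (K6 _ _ (mkclass_mem _ I) eq_refl))) with d; auto.
        apply sig_eq. simpl. rewrite Ed. symmetry. apply fD_char; auto. simpl. rewrite U. apply mkclass_mem.
        all: try exact I.
    + intros y Hy [A [[H _] Hin]]. exfalso. apply Hne. exact (MAXG A (h, Phi G w y) H Hin).
  - intros a. split.
    + intros Va. exists (proj2_sig a). destruct a; exact Va.
    + intros [H Va]. replace a with (exist (fun A => maximalFS A) (proj1_sig a) H); auto.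
      apply sig_eq; reflexivity.
Qed.

Lemma T2 U : MaxOpen U -> Kopen (fun b => exists a, U a /\ fK a = b).
Proof.
  intros [V [HV EU]] n c Eg Mc.
  assert (Red := maxchain_reduced n c Eg Mc).
  assert (Mg : Mon g) by (eapply ell_Mon; eauto).
  pose proof (HV g (wc n c) (le_one _ _ _ Mg) (le_refl _ _ _ Mg) Red) as CP.
  rewrite wc_len in CP. apply (cellopen_rev n _ _ CP). intros y Hy.
  assert (C : cellK n c y) by (split; auto).
  split.
  - intros [d [[a [Ua Ea]] Ed]]. exists (proj1_sig a). split; [apply EU; auto|].
    change (Phi G (wc n c) (revy n y)) with (uK n c y). apply member_from_D; auto.
    rewrite <- Ed, <- Ea. reflexivity.
  - intros [A [VA Hin]].
    set (a := exist (fun A => maximalFS A) A (K6 A _ Hin eq_refl) : MaxPt).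
    exists (fK a). split.
    + exists a. split; auto. apply EU. simpl. auto.
    + simpl. apply fD_char; auto.
Qed.

Lemma main : homeomorphic (@MaxOpen G X g) (@Kopen G X g).
Proof.
  exists fK. split; [exists gK; split; [apply gK_fK|apply fK_gK]|]. split.
  - apply T1.
  - apply T2.
Qed.

End Inst.

Theorem theorem5p13 (G : Group) (X : G -> Prop) (g : G)
  (hconj : @conj_closed G X) (hgen : @generates G X) (hg : @Mon G X g) :
  homeomorphic (@MaxOpen G X g) (@Kopen G X g).
Proof. apply main. Qed.
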